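(* Suppose $f$ satisfies (I), $f(\cdot,i,\mathbf q)\in C^1([0,\infty))$ for all $i,\mathbf q$, $f_t$ satisfies (I), and condition (R) holds. Let $Q^*\in\mathcal Q$ be a weak equilibrium and let $R=\{(i,Q)\in S\times(\mathcal Q\setminus\{Q^*\}):\Gamma^{Q^*}_i(Q^*_i)=\Gamma^{Q^*}_i(Q_i)\}$. If $\Lambda^{Q^*}(i,Q^* )>\Lambda^{Q^*}(i,Q)$ for all $(i,Q)\in R$, then $Q^*$ is a strong equilibrium. If $\Lambda^{Q^*}(i,Q^* )<\Lambda^{Q^*}(i,Q)$ for some $(i,Q)\in R$, then $Q^*$ is not a strong equilibrium.
   Context: Let $S=\{1,\dots,N\}$. For $i\in S$ let $E_i=\{q\in\mathbb R^N: q_j\ge0\text{ for }j\ne i,\ q_i=-\sum_{j\ne i}q_j\}$ and $D_i\subseteq E_i$ given; $\mathcal Q=\{Q\in\mathbb R^{N\times N}: Q_i\in D_i\ \forall i\}$, $Q_i$ the $i$-th row. For $Q\in\mathcal Q$, $X$ is a time-homogeneous continuous-time Markov chain on $S$ with generator $Q$, $\mathbb E_{i,Q}$ the expectation given $X_0=i$. A payoff function $f$ assigns $f(t,i,\mathbf q)\in\mathbb R$ to $t\ge0,i\in S,\mathbf q\in D_i$. Condition (I) for $g$: $\int_0^\infty\sup_{i\in S,\mathbf q\in D_i,\|\mathbf q\|\le c}|g(t,i,\mathbf q)|dt<\infty$ for all $c>0$. Condition (R): there is $r(t,\varepsilon;i,\mathbf q)$, continuous in $\varepsilon$, with $|f(t+\varepsilon,i,\mathbf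 q)-f(t,i,\mathbf q)-\varepsilon f_t(t,i,\mathbf q)|\le r(t,\varepsilon;i,\mathbf q)$, $\int_0^\infty r(t,\varepsilon;i,\mathbf q)dt<\infty$ for small $\varepsilon>0$, and $\varepsilon\mapsto r/\varepsilon$ nondecreasing. $F(i,Q)=\mathbb E_{i,Q}[\int_0^\infty f(t,X_t,Q_{X_t})dt]$, $G(i,Q)=\mathbb E_{i,Q}[\int_0^\infty f_t(t,X_t,Q_{X_t})dt]$, with vectors $F(Q),G(Q)\in\mathbb R^N$. $Q\otimes_\varepsilon Q'$: generator $Q$ on $[0,\varepsilon]$ then $Q'$ on $(\varepsilon,\infty)$, with expected payoff $F(i,Q\otimes_\varepsilon Q')$. Weak equilibrium: $\liminf_{\varepsilon\downarrow0}\varepsilon^{-1}(F(i,Q^* )-F(i,Q\otimes_\varepsilon Q^* ))\ge0$ for all $Q,i$. Strong equilibrium: for every $i,Q$ there is $\varepsilon>0$ with $F(i,Q^* )\ge F(i,Q\otimes_{\varepsilon'}Q^* )$ for all $0<\varepsilon'\le\varepsilon$. $\Gamma^{Q^*}_i(\mathbf q)=f(0,i,\mathbf q)+\mathbf q\cdot F(Q^* )$; $\Gamma^{Q^*}(Q)=(\Gamma^{Q^*}_1(Q_1),\dots,\Gamma^{Q^*}_N(Q_N))$; $\Lambda^{Q^*}(i,Q)=f_t(0,i,Q_i)+Q_i\cdot(2G(Q^* )+\Gamma^{Q^*}(Q))$. *)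

(* Defs.v *)
From Stdlib Require Import Reals Lra ClassicalEpsilon Factorial.
Open Scope R_scope.

(* States are 0..N-1 (the paper's 1..N).  A row vector / generator row is a
   function nat -> R, required to vanish at indices >= N; a matrix is
   nat -> nat -> R, with zero rows at indices >= N. *)

Fixpoint sumN (n : nat) (g : nat -> R) : R :=
  match n with O => 0 | S m => sumN m g + g m end.

Definition vnorm (N : nat) (q : nat -> R) : R := sumN N (fun j => Rabs (q j)).

Definition InE (N : nat) (i : nat) (q : nat -> R) : Prop :=
  (forall j, (j < N)%nat -> j <> i -> 0 <= q j) /\
  q i = - sumN N (fun j => if Nat.eq_dec j i then 0 else q j) /\
  (forall j, (N <= j)%nat -> q j = 0).

Definition InQ (N : nat) (D : nat -> (nat -> R) -> Prop)
  (Q : nat -> nat -> R) : Prop :=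
  (forall i, (i < N)%nat -> D i (Q i)) /\
  (forall i j, (N <= i)%nat -> Q i j = 0).

Definition matmul (N : nat) (A B : nat -> nat -> R) : nat -> nat -> R :=
  fun i j => sumN N (fun k => A i k * B k j).

Fixpoint matpow (N : nat) (Q : nat -> nat -> R) (k : nat) : nat -> nat -> R :=
  match k with
  | O => fun i j => if Nat.eq_dec i j then 1 else 0
  | S m => matmul N (matpow N Q m) Q
  end.

(* transition probabilities P(X_t = j | X_0 = i) = (exp(tQ))_{ij} *)
Definition trans (N : nat) (Q : nat -> nat -> R) (t : R) (i j : nat) : R :=
  epsilon (inhabits 0)
    (fun l => infinite_sum (fun k => t ^ k / INR (fact k) * matpow N Q k i j) l).

Definition improper_int0 (g : R -> R) (l : R) : Prop :=
  (forall T, 0 <= T -> inhabited (Riemann_integrable g 0 T)) /\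
  forall e, e > 0 -> exists T0, forall T (pr : Riemann_integrable g 0 T),
      T0 <= T -> Rabs (RiemannInt pr - l) < e.

Definition Int0inf (g : R -> R) : R := epsilon (inhabits 0) (improper_int0 g).

(* "the (nonnegative) function described by P has finite integral over [0,oo)":
   P t y means "y <= value at t"; the lower integral (sup of integrals of
   Riemann integrable minorants over [0,T]) is finite. *)
Definition fin_int (P : R -> R -> Prop) : Prop :=
  exists M, forall T (phi : R -> R) (pr : Riemann_integrable phi 0 T),
    0 <= T -> (forall t, 0 <= t <= T -> P t (phi t)) -> RiemannInt pr <= M.

Definition Payoff := R -> nat -> (nat -> R) -> R.

Definition condI (N : nat) (D : nat -> (nat -> R) -> Prop) (g : Payoff) : Prop :=
  forall c, c > 0 ->
    fin_int (fun t y => forall d, d > 0 ->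
       exists i q, (i < N)%nat /\ D i q /\ vnorm N q <= c /\ y - d <= Rabs (g t i q)).

Definition C1_with_deriv (N : nat) (D : nat -> (nat -> R) -> Prop) (f ft : Payoff) : Prop :=
  forall i q, (i < N)%nat -> D i q ->
    (forall t, 0 <= t -> forall e, e > 0 -> exists d, d > 0 /\
       forall h, h <> 0 -> Rabs h < d -> 0 <= t + h ->
         Rabs ((f (t + h) i q - f t i q) / h - ft t i q) < e) /\
    (forall t, 0 <= t -> forall e, e > 0 -> exists d, d > 0 /\
       forall s, 0 <= s -> Rabs (s - t) < d -> Rabs (ft s i q - ft t i q) < e).

Definition condR (N : nat) (D : nat -> (nat -> R) -> Prop) (f ft : Payoff) : Prop :=
  exists r : R -> R -> nat -> (nat -> R) -> R,
    forall i q, (i < N)%nat -> D i q ->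
      (forall t e, 0 <= t -> e > 0 ->
          Rabs (f (t + e) i q - f t i q - e * ft t i q) <= r t e i q) /\
      (forall t e0, 0 <= t -> e0 > 0 -> forall a, a > 0 -> exists d, d > 0 /\
          forall e, e > 0 -> Rabs (e - e0) < d -> Rabs (r t e i q - r t e0 i q) < a) /\
      (exists e1, e1 > 0 /\ forall e, 0 < e < e1 ->
          fin_int (fun t y => y <= r t e i q)) /\
      (forall t e e', 0 <= t -> 0 < e -> e <= e' -> r t e i q / e <= r t e' i q / e').

Definition Fval (N : nat) (f : Payoff) (Q : nat -> nat -> R) (i : nat) : R :=
  Int0inf (fun t => sumN N (fun j => trans N Q t i j * f t j (Q j))).

Definition Fcomp (N : nat) (f : Payoff) (Q : nat -> nat -> R) (eps : R)
  (Q' : nat -> nat -> R) (i : nat) : R :=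
  Int0inf (fun t =>
    if Rle_dec t eps then sumN N (fun j => trans N Q t i j * f t j (Q j))
    else sumN N (fun j =>
           sumN N (fun k => trans N Q eps i k * trans N Q' (t - eps) k j)
           * f t j (Q' j))).

Definition weak_eq (N : nat) (D : nat -> (nat -> R) -> Prop) (f : Payoff)
  (Qs : nat -> nat -> R) : Prop :=
  forall Q i, InQ N D Q -> (i < N)%nat ->
    forall d, d > 0 -> exists e0, e0 > 0 /\ forall e, 0 < e < e0 ->
      (Fval N f Qs i - Fcomp N f Q e Qs i) / e > - d.

Definition strong_eq (N : nat) (D : nat -> (nat -> R) -> Prop) (f : Payoff)
  (Qs : nat -> nat -> R) : Prop :=
  forall Q i, InQ N D Q -> (i < N)%nat ->
    exists e, e > 0 /\ forall e', 0 < e' <= e -> Fval N f Qs i >= Fcomp N f Q e' Qs i.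

Definition Gamma (N : nat) (f : Payoff) (Qs : nat -> nat -> R) (i : nat) (q : nat -> R) : R :=
  f 0 i q + sumN N (fun j => q j * Fval N f Qs j).

Definition Lambda (N : nat) (f ft : Payoff) (Qs : nat -> nat -> R) (i : nat)
  (Q : nat -> nat -> R) : R :=
  ft 0 i (Q i) + sumN N (fun j => Q i j * (2 * Fval N ft Qs j + Gamma N f Qs j (Q j))).

Definition InRset (N : nat) (D : nat -> (nat -> R) -> Prop) (f : Payoff)
  (Qs : nat -> nat -> R) (i : nat) (Q : nat -> nat -> R) : Prop :=
  (i < N)%nat /\ InQ N D Q /\ Q <> Qs /\
  Gamma N f Qs i (Qs i) = Gamma N f Qs i (Q i).

(* Main.v *)
Require Import Defs.
From Stdlib Require Import Reals Lra Lia ClassicalEpsilon Factorial.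
From Coquelicot Require Import Coquelicot.
Open Scope R_scope.

Lemma sumN_ext n g h : (forall j, (j < n)%nat -> g j = h j) -> sumN n g = sumN n h.
Proof. induction n; simpl; intros H; auto. rewrite IHn by (intros; apply H; lia). rewrite H by lia. auto. Qed.
Lemma sumN_plus n g h : sumN n (fun j => g j + h j) = sumN n g + sumN n h.
Proof. induction n; simpl; [lra|rewrite IHn; lra]. Qed.
Lemma sumN_minus n g h : sumN n (fun j => g j - h j) = sumN n g - sumN n h.
Proof. induction n; simpl; [lra|rewrite IHn; lra]. Qed.
Lemma sumN_scal n c g : sumN n (fun j => c * g j) = c * sumN n g.
Proof. induction n; simpl; [lra|rewrite IHn; lra]. Qed.
Lemma sumN_scal_r n c g : sumN n (fun j => g j * c) = sumN n g * c.
Proof. induction n; simpl; [lra|rewrite IHn; lra]. Qed.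
Lemma sumN_0 n : sumN n (fun _ => 0) = 0.
Proof. induction n; simpl; [lra|rewrite IHn; lra]. Qed.
Lemma sumN_swap n m g : sumN n (fun i => sumN m (fun j => g i j)) = sumN m (fun j => sumN n (fun i => g i j)).
Proof. induction n; simpl. rewrite sumN_0; auto. rewrite IHn, <- sumN_plus. auto. Qed.
Lemma sumN_abs n g : Rabs (sumN n g) <= sumN n (fun j => Rabs (g j)).
Proof. induction n; simpl. rewrite Rabs_R0; lra. eapply Rle_trans. apply Rabs_triang. lra. Qed.
Lemma sumN_le n g h : (forall j, (j<n)%nat -> g j <= h j) -> sumN n g <= sumN n h.
Proof. induction n; simpl; intros H. lra. assert (g n <= h n) by (apply H; lia).
  assert (sumN n g <= sumN n h) by (apply IHn; intros; apply H; lia). lra. Qed.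
Lemma sumN_nonneg n g : (forall j, (j<n)%nat -> 0 <= g j) -> 0 <= sumN n g.
Proof. intros H. rewrite <- (sumN_0 n). apply sumN_le. auto. Qed.
Lemma sumN_term n g j : (forall k, (k<n)%nat -> 0 <= g k) -> (j < n)%nat -> g j <= sumN n g.
Proof. induction n; intros H Hj. lia. simpl. destruct (Nat.eq_dec j n). subst.
  assert (0 <= sumN n g) by (apply sumN_nonneg; intros; apply H; lia). lra.
  assert (g j <= sumN n g) by (apply IHn; [intros; apply H; lia| lia]). assert (0 <= g n) by (apply H; lia). lra. Qed.
Lemma sumN_delta_l n i g : (i < n)%nat -> sumN n (fun l => (if Nat.eq_dec i l then 1 else 0) * g l) = g i.
Proof. induction n; intros Hi. lia. simpl. destruct (Nat.eq_dec i n).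
  - subst. rewrite (sumN_ext _ _ (fun _ => 0)). rewrite sumN_0; lra.
    intros j Hj. destruct (Nat.eq_dec n j). lia. lra.
  - rewrite IHn by lia. lra. Qed.
Lemma sumN_delta_r n j g : (j < n)%nat -> sumN n (fun l => g l * (if Nat.eq_dec l j then 1 else 0)) = g j.
Proof. induction n; intros Hi. lia. simpl. destruct (Nat.eq_dec n j).
  - subst. rewrite (sumN_ext _ _ (fun _ => 0)). rewrite sumN_0; lra.
    intros k Hk. destruct (Nat.eq_dec k j). lia. lra.
  - rewrite IHn by lia. lra. Qed.
Lemma sumN_sum_f n g : sumN (S n) g = sum_f_R0 g n.
Proof. induction n. simpl. lra. change (sumN (S (S n)) g) with (sumN (S n) g + g (S n)). rewrite IHn. simpl. auto. Qed.
Lemma sumN_split_i n i q : (i < n)%nat ->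
  sumN n q = sumN n (fun j => if Nat.eq_dec j i then 0 else q j) + q i.
Proof. induction n; intros Hi. lia. simpl. destruct (Nat.eq_dec n i).
  - subst. rewrite (sumN_ext _ (fun j => if Nat.eq_dec j i then 0 else q j) q). lra.
    intros j Hj. destruct (Nat.eq_dec j i); [lia|auto].
  - rewrite IHn by lia. lra. Qed.

Lemma matmul_assoc N A B C i j : matmul N (matmul N A B) C i j = matmul N A (matmul N B C) i j.
Proof. unfold matmul.
  rewrite (sumN_ext _ _ (fun k => sumN N (fun l => A i l * B l k * C k j))) by (intros; rewrite <- sumN_scal_r; auto).
  rewrite sumN_swap. apply sumN_ext. intros l _. rewrite <- sumN_scal. apply sumN_ext. intros; ring. Qed.

Lemma matpow_add N Q m n i j : (j < N)%nat ->
  matmul N (matpow N Q m) (matpow N Q n) i j = matpow N Q (m + n) i j.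
Proof. revert i j. induction n; intros i j Hj.
  - simpl. unfold matmul. rewrite sumN_delta_r by auto. rewrite Nat.add_0_r. auto.
  - rewrite Nat.add_succ_r. simpl. rewrite <- matmul_assoc. unfold matmul at 1 3.
    apply sumN_ext. intros l Hl. f_equal. apply IHn. auto. Qed.

Definition gen N (Q : nat -> nat -> R) :=
  (forall i j, (i<N)%nat -> (j<N)%nat -> i<>j -> 0 <= Q i j) /\
  (forall i, (i<N)%nat -> sumN N (Q i) = 0) /\
  (forall i j, (i < N)%nat -> (N <= j)%nat -> Q i j = 0).

Lemma InQ_gen N D Q : (forall i q, (i < N)%nat -> D i q -> InE N i q) -> InQ N D Q -> gen N Q.
Proof. intros HD [H1 H2]. split; [|split].
  - intros i j Hi Hj Hij. destruct (HD i (Q i) Hi (H1 i Hi)) as [A _]. apply A; auto.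
  - intros i Hi. destruct (HD i (Q i) Hi (H1 i Hi)) as [_ [B _]]. rewrite (sumN_split_i N i) by auto. lra.
  - intros i j Hi Hj. destruct (HD i (Q i) Hi (H1 i Hi)) as [_ [_ C]]. auto. Qed.

Definition Kb N (Q : nat -> nat -> R) := 1 + sumN N (fun l => sumN N (fun j => Rabs (Q l j))).

Lemma Kb_ge1 N Q : 1 <= Kb N Q.
Proof. unfold Kb. assert (0 <= sumN N (fun l => sumN N (fun j => Rabs (Q l j)))).
  apply sumN_nonneg; intros; apply sumN_nonneg; intros; apply Rabs_pos. lra. Qed.

Lemma Kb_col N Q j : (j < N)%nat -> sumN N (fun l => Rabs (Q l j)) <= Kb N Q - 1.
Proof. intros Hj. unfold Kb. ring_simplify. apply sumN_le. intros l Hl.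
  apply (sumN_term N (fun j => Rabs (Q l j))); auto. intros; apply Rabs_pos. Qed.

Lemma Kb_entry N Q i j : (i < N)%nat -> (j < N)%nat -> Rabs (Q i j) <= Kb N Q.
Proof. intros Hi Hj. pose proof (Kb_col N Q j Hj).
  pose proof (sumN_term N (fun l => Rabs (Q l j)) i (fun _ _ => Rabs_pos _) Hi). simpl in *. lra. Qed.

Lemma matpow_bound N Q k i j : (j < N)%nat -> Rabs (matpow N Q k i j) <= (Kb N Q) ^ k.
Proof. revert i j. induction k; intros i j Hj.
  - simpl. destruct (Nat.eq_dec i j); rewrite ?Rabs_R1, ?Rabs_R0; lra.
  - simpl. unfold matmul. eapply Rle_trans. apply sumN_abs.
    eapply Rle_trans. apply (sumN_le _ _ (fun l => Kb N Q ^ k * Rabs (Q l j))).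
    intros l Hl. rewrite Rabs_mult. apply Rmult_le_compat_r. apply Rabs_pos. apply IHk; auto.
    rewrite sumN_scal. pose proof (Kb_col N Q j Hj). pose proof (Kb_ge1 N Q).
    assert (0 <= Kb N Q ^ k) by (apply pow_le; lra).
    apply Rmult_le_compat_l with (r := Kb N Q ^ k) in H; auto. nra. Qed.

Lemma is_series_zero : is_series (fun _ : nat => 0) 0.
Proof. pose proof (is_series_geom 0) as H. rewrite Rabs_R0 in H.
  pose proof (is_series_scal_r 0 _ _ (H Rlt_0_1)) as H2. simpl in H2.
  eapply is_series_ext; [|rewrite Rmult_0_r in H2; exact H2]. intros; simpl; ring. Qed.

Lemma is_series_sumN n (a : nat -> nat -> R) x :
  (forall l, (l < n)%nat -> is_series (a l) (x l)) ->
  is_series (fun k => sumN n (fun l => a l k)) (sumN n x).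
Proof. induction n; intros H; simpl. apply is_series_zero.
  apply (is_series_plus _ _ _ _ (IHn (fun l Hl => H l ltac:(lia))) (H n ltac:(lia))). Qed.

Lemma series_nonneg a l : is_series a l -> (forall n, 0 <= a n) -> 0 <= l.
Proof. intros H Hn. rewrite <- (is_series_unique _ _ H).
  rewrite <- (is_series_unique _ _ is_series_zero). apply Series_le.
  intros; split; [lra|auto]. eexists; eauto. Qed.

Lemma series_le a b la lb : is_series a la -> is_series b lb -> (forall n, a n <= b n) -> la <= lb.
Proof. intros Ha Hb H. pose proof (is_series_minus _ _ _ _ Hb Ha) as Hm.
  apply series_nonneg in Hm. unfold plus, opp in Hm; simpl in Hm. lra.
  intros n. unfold plus, opp; simpl. specialize (H n). lra. Qed.

Lemma exp_series x : is_series (fun k => x ^ k / INR (fact k)) (exp x).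
Proof. pose proof (is_exp_Reals x) as H. apply is_pseries_R in H.
  eapply is_series_ext; [|exact H]. intros; simpl. unfold Rdiv; ring. Qed.

Definition term N Q t i j k := t ^ k / INR (fact k) * matpow N Q k i j.

Lemma term_abs_bound N Q t i j k : (j < N)%nat ->
  Rabs (term N Q t i j k) <= (Rabs t * Kb N Q) ^ k / INR (fact k).
Proof. intros Hj. unfold term. rewrite Rabs_mult. unfold Rdiv. rewrite Rabs_mult, <- RPow_abs.
  rewrite Rabs_inv. rewrite (Rabs_right (INR _)) by (apply Rle_ge, pos_INR).
  rewrite Rpow_mult_distr. assert (0 < / INR (fact k)) by (apply Rinv_0_lt_compat, INR_fact_lt_0).
  pose proof (matpow_bound N Q k i j Hj). assert (0 <= Rabs t ^ k) by (apply pow_le, Rabs_pos).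
  pose proof (Rabs_pos (matpow N Q k i j)).
  replace (Rabs t ^ k * Kb N Q ^ k * / INR (fact k)) with (Rabs t ^ k * / INR (fact k) * Kb N Q ^ k) by ring.
  apply Rmult_le_compat_l; auto. apply Rmult_le_pos; lra. Qed.

Lemma ex_series_abs_term N Q t i j : (j < N)%nat -> ex_series (fun k => Rabs (term N Q t i j k)).
Proof. intros Hj. apply (@ex_series_le R_AbsRing R_CompleteNormedModule _ (fun k => (Rabs t * Kb N Q) ^ k / INR (fact k))).
  intros k. unfold norm; simpl. rewrite Rabs_Rabsolu. apply term_abs_bound; auto.
  eexists; apply exp_series. Qed.

Lemma trans_series N Q t i j : (j < N)%nat -> is_series (term N Q t i j) (trans N Q t i j).
Proof. intros Hj. destruct (ex_series_Rabs _ (ex_series_abs_term N Q t i j Hj)) as [l Hl].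
  apply is_series_Reals. unfold trans.
  apply (epsilon_spec (inhabits 0) (fun l => infinite_sum (fun k => t ^ k / INR (fact k) * matpow N Q k i j) l)).
  exists l. apply is_series_Reals. exact Hl. Qed.

Lemma binom_fact s t p : (s + t) ^ p / INR (fact p) =
  sum_f_R0 (fun m => s ^ m / INR (fact m) * (t ^ (p - m) / INR (fact (p - m)))) p.
Proof. rewrite binomial. unfold Rdiv. rewrite Rmult_comm, scal_sum. apply sum_eq. intros m Hm.
  unfold Binomial.C. pose proof (INR_fact_neq_0 p). pose proof (INR_fact_neq_0 m). pose proof (INR_fact_neq_0 (p-m)).
  field. auto. Qed.

Lemma sum_f_sumN_swap n p (g : nat -> nat -> R) :
  sumN n (fun l => sum_f_R0 (fun m => g l m) p) = sum_f_R0 (fun m => sumN n (fun l => g l m)) p.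
Proof. rewrite <- sumN_sum_f. rewrite <- sumN_swap. apply sumN_ext. intros. rewrite sumN_sum_f. auto. Qed.

Lemma trans_add N Q s t i j : (j < N)%nat ->
  trans N Q (s + t) i j = sumN N (fun l => trans N Q s i l * trans N Q t l j).
Proof. intros Hj.
  assert (H : is_series (fun p => sumN N (fun l => sum_f_R0 (fun m => term N Q s i l m * term N Q t l j (p - m)) p))
     (sumN N (fun l => trans N Q s i l * trans N Q t l j))).
  { apply is_series_sumN. intros l Hl. apply is_series_mult; try apply trans_series; auto;
    apply ex_series_abs_term; auto. }
  apply (is_series_unique) in H. rewrite <- H. symmetry. apply is_series_unique.
  eapply is_series_ext; [|apply trans_series; auto]. intros p. simpl.
  rewrite sum_f_sumN_swap. unfold term. rewrite Rmult_comm, binom_fact, scal_sum. apply sum_eq.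
  intros m Hm. rewrite (sumN_ext _ _ (fun l => (s ^ m / INR (fact m) * (t ^ (p - m) / INR (fact (p - m)))) *
     (matpow N Q m i l * matpow N Q (p - m) l j))) by (intros; ring).
  rewrite sumN_scal. change (sumN N (fun l => matpow N Q m i l * matpow N Q (p - m) l j)) with
   (matmul N (matpow N Q m) (matpow N Q (p - m)) i j). rewrite matpow_add by auto.
  replace (m + (p - m))%nat with p by lia. ring. Qed.

Definition d0 (k : nat) : R := match k with O => 1 | S _ => 0 end.

Lemma rowsum_pow N Q k i : gen N Q -> (i < N)%nat ->
  sumN N (fun j => matpow N Q k i j) = d0 k.
Proof. intros [G1 [G2 G3]] Hi. destruct k.
  - simpl. rewrite (sumN_ext _ _ (fun j => (if Nat.eq_dec i j then 1 else 0) * 1)) by (intros; ring).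
    apply sumN_delta_l; auto.
  - simpl. unfold matmul. rewrite sumN_swap.
    rewrite (sumN_ext _ _ (fun l => matpow N Q k i l * sumN N (fun j => Q l j))).
    rewrite (sumN_ext _ _ (fun _ => 0)). apply sumN_0. intros l Hl. rewrite G2; auto. ring.
    intros l Hl. rewrite <- sumN_scal. auto. Qed.

Lemma trans_rowsum N Q t i : gen N Q -> (i < N)%nat -> sumN N (fun j => trans N Q t i j) = 1.
Proof. intros G Hi.
  assert (H := is_series_sumN N (fun j k => term N Q t i j k) (fun j => trans N Q t i j)
               (fun j Hj => trans_series N Q t i j Hj)).
  apply is_series_unique in H. rewrite <- H. apply is_series_unique.
  assert (H1 : is_series d0 1).
  { apply is_series_Reals. intros e He. exists O. intros n _. unfold R_dist.
    assert (Hs : sum_f_R0 d0 n = 1) by (induction n; simpl; auto; rewrite IHn; simpl; ring). rewrite Hs.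
    unfold Rminus. rewrite Rplus_opp_r, Rabs_R0. exact He. }
  eapply is_series_ext; [|exact H1]. intros k. simpl. unfold term.
  rewrite sumN_scal. rewrite rowsum_pow; auto. destruct k; simpl. field. ring. Qed.

Fixpoint bc (n k : nat) : R :=
  match n, k with
  | _, O => 1
  | O, S _ => 0
  | S n', S k' => bc n' k' + bc n' (S k')
  end.

Lemma bc_0 n k : (n < k)%nat -> bc n k = 0.
Proof. revert k; induction n; intros k Hk; destruct k; try lia; simpl; auto.
  rewrite !IHn by lia. ring. Qed.

Lemma bc_C n k : (k <= n)%nat -> bc n k = Binomial.C n k.
Proof. revert k; induction n; intros k Hk.
  - destruct k; [|lia]. simpl. unfold Binomial.C. simpl. field.
  - destruct k. simpl. unfold Binomial.C. rewrite Nat.sub_0_r. replace (INR (fact 0)) with 1 by reflexivity. field. apply INR_fact_neq_0.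
    simpl. destruct (Nat.eq_dec k n).
    + subst. rewrite (bc_0 n (S n)) by lia. rewrite IHn by lia. unfold Binomial.C. rewrite !Nat.sub_diag. field.
      repeat split; apply INR_fact_neq_0.
    + rewrite !IHn by lia. apply pascal. lia. Qed.

Lemma sumN_shift n g : sumN (S n) g = g O + sumN n (fun k => g (S k)).
Proof. induction n. simpl. ring. change (sumN (S (S n)) g) with (sumN (S n) g + g (S n)). rewrite IHn. simpl. ring. Qed.

Lemma binom_step (x : nat -> R) c p :
  sumN (S (S p)) (fun m => bc (S p) m * c ^ (S p - m) * x m) =
  sumN (S p) (fun m => bc p m * c ^ (p - m) * x (S m)) + c * sumN (S p) (fun m => bc p m * c ^ (p - m) * x m).
Proof.
  rewrite sumN_shift. simpl bc at 1. rewrite Nat.sub_0_r.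
  rewrite (sumN_ext _ _ (fun k => bc p k * c ^ (p - k) * x (S k) + bc p (S k) * c ^ (p - k) * x (S k)))
    by (intros; simpl; ring).
  rewrite sumN_plus. rewrite (sumN_shift p (fun m => bc p m * c ^ (p - m) * x m)).
  simpl (sumN (S p) (fun k => bc p (S k) * c ^ (p - k) * x (S k))).
  rewrite bc_0 by lia. rewrite Nat.sub_0_r. simpl bc.
  assert (Hb : bc p 0 = 1) by (destruct p; auto). rewrite Hb.
  rewrite Rmult_plus_distr_l, <- sumN_scal.
  rewrite (sumN_ext p (fun k => c * (bc p (S k) * c ^ (p - S k) * x (S k))) (fun k => bc p (S k) * c ^ (p - k) * x (S k))).
  simpl. ring.
  intros k Hk. replace (p - k)%nat with (S (p - S k)) by lia. simpl. ring. Qed.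

Definition shiftM (N : nat) (Q : nat -> nat -> R) (c : R) : nat -> nat -> R := fun a b => Q a b + (if Nat.eq_dec a b then c else 0).

Lemma binom_mat N Q c p i j : (i < N)%nat -> (j < N)%nat ->
  matpow N (shiftM N Q c) p i j = sumN (S p) (fun m => bc p m * c ^ (p - m) * matpow N Q m i j).
Proof. revert i j. induction p; intros i j Hi Hj.
  - simpl. ring.
  - rewrite binom_step. simpl matpow at 1. unfold matmul, shiftM.
    rewrite (sumN_ext _ _ (fun l => matpow N (fun a b => Q a b + (if Nat.eq_dec a b then c else 0)) p i l * Q l j
       + c * (matpow N (fun a b => Q a b + (if Nat.eq_dec a b then c else 0)) p i l * (if Nat.eq_dec l j then 1 else 0))))
       by (intros l0 _; destruct (Nat.eq_dec l0 j); ring).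
    rewrite sumN_plus, sumN_scal, sumN_delta_r by auto. fold (shiftM N Q c). rewrite IHp by auto. f_equal.
    rewrite (sumN_ext _ _ (fun l => sumN (S p) (fun m => bc p m * c ^ (p - m) * (matpow N Q m i l * Q l j)))).
    rewrite sumN_swap. apply sumN_ext. intros m Hm. rewrite sumN_scal. simpl. unfold matmul. auto.
    intros l Hl. rewrite IHp by auto. rewrite <- sumN_scal_r. apply sumN_ext. intros; ring. Qed.

Lemma shiftM_pow_nonneg N Q p i j : gen N Q -> (i < N)%nat -> (j < N)%nat ->
  0 <= matpow N (shiftM N Q (Kb N Q)) p i j.
Proof. intros G. revert i j. induction p; intros i j Hi Hj.
  - simpl. destruct (Nat.eq_dec i j); lra.
  - simpl. unfold matmul. apply sumN_nonneg. intros l Hl. apply Rmult_le_pos. apply IHp; auto.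
    unfold shiftM. destruct G as [G1 _]. destruct (Nat.eq_dec l j).
    + subst. pose proof (Kb_entry N Q j j Hj Hj).
      pose proof (Rle_abs (- Q j j)) as H0. rewrite Rabs_Ropp in H0. lra.
    + pose proof (G1 l j Hl Hj n). lra. Qed.

Lemma trans_nonneg N Q t i j : gen N Q -> 0 <= t -> (i < N)%nat -> (j < N)%nat -> 0 <= trans N Q t i j.
Proof. intros G Ht Hi Hj. set (c := Kb N Q).
  assert (Ha : is_series (fun m => (c * t) ^ m / INR (fact m)) (exp (c * t))) by apply exp_series.
  assert (Haa : ex_series (fun m => Rabs ((c * t) ^ m / INR (fact m)))).
  { eexists. eapply is_series_ext; [|exact Ha]. intros m. rewrite Rabs_pos_eq; auto.
    apply Rmult_le_pos. apply pow_le. pose proof (Kb_ge1 N Q). unfold c. nra.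
    left; apply Rinv_0_lt_compat, INR_fact_lt_0. }
  pose proof (is_series_mult _ _ _ _ (trans_series N Q t i j Hj) Ha (ex_series_abs_term N Q t i j Hj) Haa) as HM.
  apply series_nonneg in HM. pose proof (exp_pos (c * t)). nra.
  intros p. rewrite <- sumN_sum_f.
  rewrite (sumN_ext _ _ (fun m => t ^ p / INR (fact p) * (bc p m * c ^ (p - m) * matpow N Q m i j))).
  rewrite sumN_scal, <- binom_mat by auto. apply Rmult_le_pos.
  apply Rmult_le_pos. apply pow_le; auto. left; apply Rinv_0_lt_compat, INR_fact_lt_0.
  apply shiftM_pow_nonneg; auto.
  intros m Hm. unfold term. rewrite bc_C by lia. unfold Binomial.C.
  replace (t ^ p) with (t ^ m * t ^ (p - m)) by (rewrite <- pow_add; f_equal; lia).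
  rewrite Rpow_mult_distr.
  pose proof (INR_fact_neq_0 p). pose proof (INR_fact_neq_0 m). pose proof (INR_fact_neq_0 (p-m)).
  field. repeat split; auto. Qed.

Lemma trans_le1 N Q t i j : gen N Q -> 0 <= t -> (i < N)%nat -> (j < N)%nat -> trans N Q t i j <= 1.
Proof. intros G Ht Hi Hj. rewrite <- (trans_rowsum N Q t i G Hi).
  apply (sumN_term N (fun j => trans N Q t i j)); auto. intros; apply trans_nonneg; auto. Qed.

Lemma trans_abs N Q t i j : gen N Q -> 0 <= t -> (i < N)%nat -> (j < N)%nat -> Rabs (trans N Q t i j) <= 1.
Proof. intros. rewrite Rabs_pos_eq by (apply trans_nonneg; auto). apply trans_le1; auto. Qed.

Definition dl (i j : nat) : R := if Nat.eq_dec i j then 1 else 0.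

Lemma trans_taylor N Q t i j : (j < N)%nat -> 0 <= t -> t * Kb N Q <= / 2 ->
  Rabs (trans N Q t i j - (dl i j + t * matpow N Q 1 i j + t ^ 2 / 2 * matpow N Q 2 i j)) <= 2 * (t * Kb N Q) ^ 3.
Proof. intros Hj Ht HtK. set (x := t * Kb N Q). assert (Hx : 0 <= x) by (unfold x; pose proof (Kb_ge1 N Q); nra).
  set (l := trans N Q t i j - sum_n (term N Q t i j) 2).
  assert (H : is_series (fun k => term N Q t i j (3 + k)) l).
  { assert (E: trans N Q t i j = plus l (sum_n (term N Q t i j) (pred 3))) by (unfold l, plus; simpl; ring).
    pose proof (trans_series N Q t i j Hj) as T. rewrite E in T. apply is_series_incr_n; [lia|exact T]. }
  assert (Hs : sum_n (term N Q t i j) 2 = dl i j + t * matpow N Q 1 i j + t ^ 2 / 2 * matpow N Q 2 i j).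
  { rewrite sum_n_Reals. simpl. unfold term, dl. simpl. field. }
  fold l. rewrite <- Hs. fold l.
  assert (Hg : is_series (fun k => x ^ 3 * x ^ k) (x ^ 3 * / (1 - x))).
  { assert (Hq : Rabs x < 1) by (assert (x <= / 2) by exact HtK; rewrite Rabs_pos_eq; lra).
    pose proof (is_series_scal_l (x ^ 3) _ _ (is_series_geom x Hq)) as G. exact G. }
  assert (Hb : forall k, Rabs (term N Q t i j (3 + k)) <= x ^ 3 * x ^ k).
  { intros k. eapply Rle_trans. apply term_abs_bound; auto. rewrite Rabs_pos_eq by auto. fold x.
    rewrite <- pow_add. unfold Rdiv. rewrite <- (Rmult_1_r (x ^ (3 + k))) at 2. apply Rmult_le_compat_l.
    apply pow_le; auto. rewrite <- Rinv_1. apply Rinv_le_contravar. lra.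
    apply (le_INR 1). apply lt_O_fact. }
  assert (H1 : l <= x ^ 3 * / (1 - x)).
  { apply (series_le _ _ _ _ H Hg). intros k. specialize (Hb k). 
    pose proof (Rle_abs (term N Q t i j (3 + k))). lra. }
  assert (H2 : - (x ^ 3 * / (1 - x)) <= l).
  { pose proof (is_series_opp _ _ Hg) as Hg'. apply (series_le _ _ _ _ Hg' H). intros k. specialize (Hb k).
    unfold opp; simpl. pose proof (Rle_abs (- term N Q t i j (3 + k))). rewrite Rabs_Ropp in H0. simpl in Hb, H0 |- *. lra. }
  assert (Hx2 : x <= / 2) by exact HtK.
  assert (x ^ 3 * / (1 - x) <= 2 * x ^ 3).
  { assert (0 <= x ^ 3) by (apply pow_le; auto). assert (/ (1 - x) <= 2).
    { replace 2 with (/ / 2) by field. apply Rinv_le_contravar. lra. lra. } nra. }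
  apply Rabs_le. lra. Qed.

Lemma sumN_const n c : sumN n (fun _ => c) = INR n * c.
Proof. induction n; simpl sumN. simpl; ring. rewrite IHn, S_INR. ring. Qed.

Lemma matpow1 N Q i j : (i < N)%nat -> matpow N Q 1 i j = Q i j.
Proof. intros Hi. simpl. unfold matmul. apply (sumN_delta_l N i (fun l => Q l j)); auto. Qed.

Lemma matpow2 N Q i j : (i < N)%nat -> matpow N Q 2 i j = sumN N (fun l => Q i l * Q l j).
Proof. intros Hi. change (matpow N Q 2 i j) with (sumN N (fun l => matpow N Q 1 i l * Q l j)).
  apply sumN_ext. intros. rewrite matpow1; auto. Qed.

Lemma trans_t1 N Q t i j : (i < N)%nat -> (j < N)%nat -> 0 <= t -> t * Kb N Q <= / 2 ->
  Rabs (trans N Q t i j - dl i j - t * Q i j) <= 2 * Kb N Q ^ 2 * t ^ 2.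
Proof. intros Hi Hj Ht HtK. pose proof (trans_taylor N Q t i j Hj Ht HtK) as H.
  rewrite matpow1 in H by auto. pose proof (matpow_bound N Q 2 i j Hj) as H2.
  set (K := Kb N Q) in *. set (m2 := matpow N Q 2 i j) in *.
  replace (trans N Q t i j - dl i j - t * Q i j) with
    ((trans N Q t i j - (dl i j + t * Q i j + t ^ 2 / 2 * m2)) + t ^ 2 / 2 * m2) by ring.
  eapply Rle_trans. apply Rabs_triang. rewrite Rabs_mult.
  rewrite (Rabs_pos_eq (t ^ 2 / 2)) by (apply Rmult_le_pos; [apply pow_le; auto|lra]).
  assert (HK : 1 <= K) by apply Kb_ge1.
  assert (t ^ 2 / 2 * Rabs m2 <= t ^ 2 / 2 * K ^ 2) by (apply Rmult_le_compat_l; [apply Rmult_le_pos; [apply pow_le; auto|lra]|auto]).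
  assert ((t * K) ^ 3 <= (t * K) ^ 2 / 2).
  { replace ((t*K)^3) with ((t*K)^2 * (t*K)) by ring. assert (0 <= (t*K)^2) by (apply pow_le; nra).
    assert (HtK2 : t * K <= / 2) by exact HtK. apply Rmult_le_compat_l with (r := (t*K)^2) in HtK2; lra. }
  replace ((t*K)^2) with (K^2 * t^2) in * by ring. assert (0 <= K^2 * t^2) by (apply Rmult_le_pos; apply pow2_ge_0). lra. Qed.

Lemma trans_t0 N Q t i j : (i < N)%nat -> (j < N)%nat -> 0 <= t -> t * Kb N Q <= / 2 ->
  Rabs (trans N Q t i j - dl i j) <= 2 * Kb N Q * t.
Proof. intros Hi Hj Ht HtK. pose proof (trans_t1 N Q t i j Hi Hj Ht HtK).
  pose proof (Kb_entry N Q i j Hi Hj). set (K := Kb N Q) in *.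
  replace (trans N Q t i j - dl i j) with ((trans N Q t i j - dl i j - t * Q i j) + t * Q i j) by ring.
  eapply Rle_trans. apply Rabs_triang. rewrite Rabs_mult, (Rabs_pos_eq t) by auto.
  assert (t * Rabs (Q i j) <= t * K) by (apply Rmult_le_compat_l; auto).
  assert (2 * K ^ 2 * t ^ 2 <= K * t). { replace (2 * K^2 * t^2) with ((K * t) * (2 * (t * K))) by ring.
    assert (HK: 1 <= K) by apply Kb_ge1. assert (0 <= K * t) by nra. nra. }
  lra. Qed.

Lemma trans_lip N Q s h i j : gen N Q -> (i < N)%nat -> (j < N)%nat -> 0 <= s -> 0 <= h -> h * Kb N Q <= / 2 ->
  Rabs (trans N Q (s + h) i j - trans N Q s i j) <= INR N * (2 * Kb N Q * h).
Proof. intros G Hi Hj Hs Hh HhK. rewrite trans_add by auto.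
  rewrite <- (sumN_delta_r N j (fun l => trans N Q s i l)) by auto.
  rewrite <- sumN_minus. rewrite <- sumN_const. eapply Rle_trans. apply sumN_abs. apply sumN_le.
  intros l Hl. replace (trans N Q s i l * trans N Q h l j - trans N Q s i l * (if Nat.eq_dec l j then 1 else 0))
    with (trans N Q s i l * (trans N Q h l j - dl l j)) by (unfold dl; ring).
  rewrite Rabs_mult. pose proof (trans_abs N Q s i l G Hs Hi Hl). pose proof (trans_t0 N Q h l j Hl Hj Hh HhK).
  pose proof (Rabs_pos (trans N Q h l j - dl l j)). pose proof (Rabs_pos (trans N Q s i l)). nra. Qed.

Definition rc (g : R -> R) := forall x, continuity_pt (fun t => g (Rmax 0 t)) x.

Lemma Rmax0_lip x y : Rabs (Rmax 0 y - Rmax 0 x) <= Rabs (y - x).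
Proof. unfold Rmax. destruct (Rle_dec 0 y); destruct (Rle_dec 0 x); unfold Rabs;
  repeat destruct Rcase_abs; lra. Qed.

Lemma rc_of_local g : (forall x, 0 <= x -> forall e, e > 0 -> exists d, d > 0 /\
   forall y, 0 <= y -> Rabs (y - x) < d -> Rabs (g y - g x) < e) -> rc g.
Proof. intros H x0 e He. assert (Hx : 0 <= Rmax 0 x0) by apply Rmax_l.
  destruct (H _ Hx e He) as [d [Hd H1]]. exists d. split; auto. intros y [_ Hy].
  simpl in *. unfold R_dist in *. apply H1. apply Rmax_l. eapply Rle_lt_trans. apply Rmax0_lip. auto. Qed.

Lemma local_of_rc g : rc g -> forall x, 0 <= x -> forall e, e > 0 -> exists d, d > 0 /\
   forall y, 0 <= y -> Rabs (y - x) < d -> Rabs (g y - g x) < e.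
Proof. intros H x Hx e He. destruct (H x e He) as [d [Hd H1]]. exists d. split; auto. intros y Hy Hyx.
  destruct (Req_dec y x). subst. rewrite Rminus_diag_eq; auto. rewrite Rabs_R0. auto.
  specialize (H1 y). simpl in H1. unfold R_dist in H1. rewrite !Rmax_right in H1 by auto. apply H1.
  split; auto. unfold D_x, no_cond. auto. Qed.

Lemma rc_ext g h : (forall t, 0 <= t -> g t = h t) -> rc g -> rc h.
Proof. intros E H x. apply (continuity_pt_ext (fun t => g (Rmax 0 t))). intros. apply E, Rmax_l. apply H. Qed.

Lemma rc_const c : rc (fun _ => c).
Proof. intros x. apply continuity_pt_const. intros a b; auto. Qed.

Lemma rc_plus g h : rc g -> rc h -> rc (fun t => g t + h t).
Proof. intros Hg Hh x. apply (continuity_pt_plus _ _ x (Hg x) (Hh x)). Qed.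
Lemma rc_minus g h : rc g -> rc h -> rc (fun t => g t - h t).
Proof. intros Hg Hh x. apply (continuity_pt_minus _ _ x (Hg x) (Hh x)). Qed.
Lemma rc_mult g h : rc g -> rc h -> rc (fun t => g t * h t).
Proof. intros Hg Hh x. apply (continuity_pt_mult _ _ x (Hg x) (Hh x)). Qed.
Lemma rc_scal c g : rc g -> rc (fun t => c * g t).
Proof. intros Hg. apply rc_mult; auto. apply rc_const. Qed.
Lemma rc_abs g : rc g -> rc (fun t => Rabs (g t)).
Proof. intros Hg x. apply (continuity_pt_comp (fun t => g (Rmax 0 t)) Rabs x (Hg x)). apply Rcontinuity_abs. Qed.
Lemma rc_sumN n (g : nat -> R -> R) : (forall l, (l < n)%nat -> rc (g l)) -> rc (fun t => sumN n (fun l => g l t)).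
Proof. induction n; intros H; simpl. apply rc_const. apply rc_plus. apply IHn; intros; apply H; lia. apply H; lia. Qed.
Lemma rc_shift g c : 0 <= c -> rc g -> rc (fun t => g (t + c)).
Proof. intros Hc Hg. apply rc_of_local. intros x Hx e He.
  destruct (local_of_rc g Hg (x + c) ltac:(lra) e He) as [d [Hd H]]. exists d. split; auto.
  intros y Hy Hyx. apply H. lra. replace (y + c - (x + c)) with (y - x) by ring. auto. Qed.

Lemma rc_cont g : rc g -> forall x, continuous (fun t => g (Rmax 0 t)) x.
Proof. intros H x. apply continuity_pt_filterlim. apply H. Qed.

Lemma rc_exRInt g a b : rc g -> 0 <= a -> a <= b -> ex_RInt g a b.
Proof. intros H Ha Hab. apply (ex_RInt_ext (fun t => g (Rmax 0 t))).
  intros x Hx. rewrite Rmin_left, Rmax_right in Hx by auto. rewrite Rmax_right; auto. lra.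
  apply (@ex_RInt_continuous R_CompleteNormedModule). intros; apply rc_cont; auto. Qed.

Lemma trans_rc N Q i j : gen N Q -> (i < N)%nat -> (j < N)%nat -> rc (fun t => trans N Q t i j).
Proof. intros G Hi Hj. apply rc_of_local. intros x Hx e He.
  set (K := Kb N Q). assert (HK : 1 <= K) by apply Kb_ge1.
  set (d := Rmin (/ (2 * K)) (e / (INR N * 2 * K + 1))).
  assert (Hd : d > 0). { unfold d. apply Rmin_pos. apply Rinv_0_lt_compat. lra.
    apply Rdiv_lt_0_compat; auto. pose proof (pos_INR N). nra. }
  exists d. split; auto. intros y Hy Hyx.
  assert (Hd1 : d <= / (2 * K)) by apply Rmin_l. assert (Hd2 : d <= e / (INR N * 2 * K + 1)) by apply Rmin_r.
  pose proof (pos_INR N).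
  assert (Hc : INR N * 2 * K * d < e).
  { assert (e / (INR N * 2 * K + 1) * (INR N * 2 * K + 1) = e) by (field; nra).
    assert (INR N * 2 * K * d <= INR N * 2 * K * (e / (INR N * 2 * K + 1))) by (apply Rmult_le_compat_l; nra).
    assert (0 < e / (INR N * 2 * K + 1)) by (apply Rdiv_lt_0_compat; nra). nra. }
  assert (HdK : d * K <= / 2). { assert (/ (2 * K) * K = / 2) by (field; lra). nra. }
  destruct (Rle_dec x y).
  - replace y with (x + (y - x)) by ring. eapply Rle_lt_trans. apply trans_lip; auto; try lra.
    rewrite Rabs_pos_eq in Hyx by lra. fold K. nra. fold K. rewrite Rabs_pos_eq in Hyx by lra. nra.
  - rewrite Rabs_minus_sym. replace x with (y + (x - y)) by ring. eapply Rle_lt_trans. apply trans_lip; auto; try lra.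
    rewrite Rabs_minus_sym, Rabs_pos_eq in Hyx by lra. fold K. nra.
    fold K. rewrite Rabs_minus_sym, Rabs_pos_eq in Hyx by lra. nra. Qed.

Lemma ex_RInt_plusR f g a b : ex_RInt f a b -> ex_RInt g a b -> ex_RInt (fun x => f x + g x) a b.
Proof. intros. apply (ex_RInt_plus f g); auto. Qed.
Lemma RInt_plusR f g a b : ex_RInt f a b -> ex_RInt g a b -> RInt (fun x => f x + g x) a b = RInt f a b + RInt g a b.
Proof. intros. apply (RInt_plus f g); auto. Qed.
Lemma ex_RInt_scalR c f a b : ex_RInt f a b -> ex_RInt (fun x => c * f x) a b.
Proof. intros. apply (ex_RInt_scal f a b c); auto. Qed.
Lemma RInt_scalR c f a b : ex_RInt f a b -> RInt (fun x => c * f x) a b = c * RInt f a b.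
Proof. intros. apply (RInt_scal f a b c); auto. Qed.
Lemma RInt_ChaslesR f a b c : ex_RInt f a b -> ex_RInt f b c -> RInt f a b + RInt f b c = RInt f a c.
Proof. intros. apply (RInt_Chasles f a b c); auto. Qed.
Lemma ex_RInt_absR f a b : ex_RInt f a b -> ex_RInt (fun x => Rabs (f x)) a b.
Proof. intros. apply (ex_RInt_norm f a b); auto. Qed.
Lemma exR_sub1 (f : R -> R) a b c : a <= b <= c -> ex_RInt f a c -> ex_RInt f a b.
Proof. apply (@ex_RInt_Chasles_1 R_CompleteNormedModule). Qed.
Lemma exR_sub2 (f : R -> R) a b c : a <= b <= c -> ex_RInt f a c -> ex_RInt f b c.
Proof. apply (@ex_RInt_Chasles_2 R_CompleteNormedModule). Qed.
Lemma exR_chasles (f : R -> R) a b c : ex_RInt f a b -> ex_RInt f b c -> ex_RInt f a c.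
Proof. apply ex_RInt_Chasles. Qed.
Lemma RInt_zero a b : RInt (fun _ => 0) a b = 0.
Proof. rewrite RInt_const. unfold scal; simpl. unfold mult; simpl. ring. Qed.

Lemma RInt_le_abs f g a b : a <= b -> ex_RInt f a b -> ex_RInt g a b ->
  (forall x, a < x < b -> Rabs (f x) <= g x) -> Rabs (RInt f a b) <= RInt g a b.
Proof. intros Hab Hf Hg H. eapply Rle_trans. apply abs_RInt_le; auto.
  apply RInt_le; auto. apply ex_RInt_absR; auto. Qed.

Lemma RInt_le_const f a b M : a <= b -> ex_RInt f a b -> (forall x, a < x < b -> Rabs (f x) <= M) ->
  Rabs (RInt f a b) <= (b - a) * M.
Proof. intros. eapply Rle_trans. apply (RInt_le_abs f (fun _ => M)); auto. apply ex_RInt_const.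
  rewrite RInt_const. unfold scal; simpl; unfold mult; simpl. lra. Qed.

Lemma ex_RInt_sumN n (g : nat -> R -> R) a b : (forall l, (l < n)%nat -> ex_RInt (g l) a b) ->
  ex_RInt (fun t => sumN n (fun l => g l t)) a b.
Proof. induction n; intros H; simpl. apply ex_RInt_const. apply ex_RInt_plusR. apply IHn; intros; apply H; lia. apply H; lia. Qed.
Lemma RInt_sumN n (g : nat -> R -> R) a b : (forall l, (l < n)%nat -> ex_RInt (g l) a b) ->
  RInt (fun t => sumN n (fun l => g l t)) a b = sumN n (fun l => RInt (g l) a b).
Proof. induction n; intros H; simpl. apply RInt_zero.
  rewrite RInt_plusR. rewrite IHn. auto. intros; apply H; lia. apply ex_RInt_sumN; intros; apply H; lia. apply H; lia. Qed.

Lemma RInt_shift (g : R -> R) c a b : ex_RInt g (a + c) (b + c) -> RInt (fun s => g (s + c)) a b = RInt g (a + c) (b + c).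
Proof. intros H. pose proof (RInt_comp_lin g 1 c a b) as E. rewrite !Rmult_1_l in E. rewrite <- E by auto.
  apply RInt_ext. intros. unfold scal; simpl; unfold mult; simpl. rewrite !Rmult_1_l. reflexivity. Qed.
Lemma ex_RInt_shift (g : R -> R) c a b : ex_RInt g (a + c) (b + c) -> ex_RInt (fun s => g (s + c)) a b.
Proof. intros H. pose proof (ex_RInt_comp_lin g 1 c a b) as E. rewrite !Rmult_1_l in E.
  apply (ex_RInt_ext (fun y => scal 1 (g (1 * y + c)))). intros. unfold scal; simpl; unfold mult; simpl. rewrite !Rmult_1_l. reflexivity.
  auto. Qed.
Definition IInt (g : R -> R) (l : R) := (forall T, 0 <= T -> ex_RInt g 0 T) /\
  (forall e, e > 0 -> exists T0, forall T, T0 <= T -> Rabs (RInt g 0 T - l) < e).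

Lemma IInt_unique g l1 l2 : IInt g l1 -> IInt g l2 -> l1 = l2.
Proof. intros [_ H1] [_ H2]. destruct (Req_dec l1 l2); auto. exfalso.
  assert (He : Rabs (l1 - l2) / 2 > 0) by (apply Rdiv_lt_0_compat; [apply Rabs_pos_lt; lra|lra]).
  destruct (H1 _ He) as [T1 A]. destruct (H2 _ He) as [T2 B].
  specialize (A (Rmax T1 T2) (Rmax_l _ _)). specialize (B (Rmax T1 T2) (Rmax_r _ _)).
  set (x := RInt g 0 (Rmax T1 T2)) in *. 
  assert (Rabs (l1 - l2) <= Rabs (x - l1) + Rabs (x - l2)).
  { replace (l1 - l2) with (- (x - l1) + (x - l2)) by ring. eapply Rle_trans. apply Rabs_triang. rewrite Rabs_Ropp. lra. }
  lra. Qed.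

Lemma IInt_improper g l : IInt g l -> improper_int0 g l.
Proof. intros [H1 H2]. split.
  - intros T HT. constructor. apply ex_RInt_Reals_0. auto.
  - intros e He. destruct (H2 e He) as [T0 A]. exists T0. intros T pr HT. rewrite <- RInt_Reals. auto. Qed.

Lemma improper_unique g l1 l2 : improper_int0 g l1 -> improper_int0 g l2 -> l1 = l2.
Proof. intros [H0 H1] [_ H2]. destruct (Req_dec l1 l2); auto. exfalso.
  assert (He : Rabs (l1 - l2) / 2 > 0) by (apply Rdiv_lt_0_compat; [apply Rabs_pos_lt; lra|lra]).
  destruct (H1 _ He) as [T1 A]. destruct (H2 _ He) as [T2 B].
  set (T := Rmax 0 (Rmax T1 T2)). assert (HT : 0 <= T) by apply Rmax_l.
  destruct (H0 T HT) as [pr].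
  assert (T1 <= T) by (unfold T; eapply Rle_trans; [apply Rmax_l|apply Rmax_r]).
  assert (T2 <= T) by (unfold T; eapply Rle_trans; [apply Rmax_r|apply Rmax_r]).
  specialize (A T pr H3). specialize (B T pr H4). set (x := RiemannInt pr) in *.
  assert (Rabs (l1 - l2) <= Rabs (x - l1) + Rabs (x - l2)).
  { replace (l1 - l2) with (- (x - l1) + (x - l2)) by ring. eapply Rle_trans. apply Rabs_triang. rewrite Rabs_Ropp. lra. }
  lra. Qed.

Lemma IInt_Int0inf g l : IInt g l -> Int0inf g = l.
Proof. intros H. pose proof (IInt_improper g l H) as H1. unfold Int0inf.
  apply (improper_unique g). apply (epsilon_spec (inhabits 0) (improper_int0 g)). exists l; auto. auto. Qed.

Lemma IInt_ext g h l : (forall t, 0 < t -> g t = h t) -> IInt g l -> IInt h l.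
Proof. intros E [H1 H2]. split.
  - intros T HT. apply (ex_RInt_ext g). intros x Hx. rewrite Rmin_left in Hx by auto. apply E. lra. auto.
  - intros e He. destruct (H2 e He) as [T0 A]. exists (Rmax 0 T0). intros T HT.
    assert (0 <= T) by (eapply Rle_trans; [apply Rmax_l|exact HT]).
    rewrite <- (RInt_ext g). apply A. eapply Rle_trans; [apply Rmax_r|exact HT].
    intros x Hx. rewrite Rmin_left in Hx by auto. apply E. lra. Qed.

Lemma IInt_plus g h a b : IInt g a -> IInt h b -> IInt (fun t => g t + h t) (a + b).
Proof. intros [G1 G2] [H1 H2]. split.
  - intros. apply ex_RInt_plusR; auto.
  - intros e He. destruct (G2 (e/2) ltac:(lra)) as [T1 A]. destruct (H2 (e/2) ltac:(lra)) as [T2 B].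
    exists (Rmax 0 (Rmax T1 T2)). intros T HT.
    assert (0 <= T) by (eapply Rle_trans; [apply Rmax_l|exact HT]).
    assert (T1 <= T) by (eapply Rle_trans; [|exact HT]; eapply Rle_trans; [apply Rmax_l|apply Rmax_r]).
    assert (T2 <= T) by (eapply Rle_trans; [|exact HT]; eapply Rle_trans; [apply Rmax_r|apply Rmax_r]).
    rewrite RInt_plusR by auto. specialize (A T H0). specialize (B T H3).
    replace (RInt g 0 T + RInt h 0 T - (a + b)) with ((RInt g 0 T - a) + (RInt h 0 T - b)) by ring.
    eapply Rle_lt_trans. apply Rabs_triang. lra. Qed.

Lemma IInt_scal c g a : IInt g a -> IInt (fun t => c * g t) (c * a).
Proof. intros [G1 G2]. split.
  - intros. apply ex_RInt_scalR; auto.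
  - intros e He. destruct (G2 (e / (Rabs c + 1))) as [T1 A].
    apply Rdiv_lt_0_compat; auto. pose proof (Rabs_pos c); lra.
    exists (Rmax 0 T1). intros T HT.
    assert (0 <= T) by (eapply Rle_trans; [apply Rmax_l|exact HT]).
    assert (T1 <= T) by (eapply Rle_trans; [apply Rmax_r|exact HT]).
    rewrite RInt_scalR by auto. replace (c * RInt g 0 T - c * a) with (c * (RInt g 0 T - a)) by ring.
    rewrite Rabs_mult. specialize (A T H0). pose proof (Rabs_pos c).
    assert (e / (Rabs c + 1) * (Rabs c + 1) = e) by (field; lra).
    assert (Rabs c * Rabs (RInt g 0 T - a) <= Rabs c * (e / (Rabs c + 1))) by (apply Rmult_le_compat_l; lra).
    assert (0 < e / (Rabs c + 1)) by (apply Rdiv_lt_0_compat; lra). nra. Qed.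

Lemma IInt_zero : IInt (fun _ => 0) 0.
Proof. split. intros; apply ex_RInt_const. intros e He. exists 0. intros. rewrite RInt_zero. 
  rewrite Rminus_0_r, Rabs_R0. lra. Qed.

Lemma IInt_sumN n (g : nat -> R -> R) (a : nat -> R) : (forall l, (l < n)%nat -> IInt (g l) (a l)) ->
  IInt (fun t => sumN n (fun l => g l t)) (sumN n a).
Proof. induction n; intros H; simpl. apply IInt_zero. apply IInt_plus. apply IHn. intros; apply H; lia. apply H; lia. Qed.

Lemma IInt_shift (g : R -> R) c m : 0 <= c -> ex_RInt g 0 c -> IInt (fun s => g (s + c)) m ->
  IInt g (RInt g 0 c + m).
Proof. intros Hc Hg [H1 H2].
  assert (Hex : forall T, c <= T -> ex_RInt g c T).
  { intros T HT. specialize (H1 (T - c) ltac:(lra)).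
    pose proof (ex_RInt_comp_lin (fun s => g (s + c)) 1 (- c) c T) as E. rewrite !Rmult_1_l in E.
    replace (c + - c) with 0 in E by ring. replace (T + - c) with (T - c) in E by ring.
    specialize (E H1). refine (ex_RInt_ext _ _ _ _ _ E). intros x _. unfold scal; simpl; unfold mult; simpl.
    rewrite !Rmult_1_l. f_equal; ring. }
  split.
  - intros T HT. destruct (Rle_dec T c).
    + apply (ex_RInt_Chasles_1 g 0 T c); auto.
    + apply (ex_RInt_Chasles g 0 c T); auto. apply Hex. lra.
  - intros e He. destruct (H2 e He) as [T0 A]. exists (Rmax c (T0 + c)). intros T HT.
    assert (c <= T) by (eapply Rle_trans; [apply Rmax_l|exact HT]).
    assert (T0 + c <= T) by (eapply Rle_trans; [apply Rmax_r|exact HT]).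
    rewrite <- (RInt_ChaslesR g 0 c T); auto.
    replace (RInt g c T) with (RInt (fun s => g (s + c)) 0 (T - c)).
    replace (RInt g 0 c + RInt (fun s => g (s + c)) 0 (T - c) - (RInt g 0 c + m)) with
      (RInt (fun s => g (s + c)) 0 (T - c) - m) by ring. apply A. lra.
    rewrite RInt_shift. f_equal; ring. replace (0 + c) with c by ring. replace (T - c + c) with T by ring. auto. Qed.

Lemma IInt_bound g l B T1 : IInt g l -> (forall T, T1 <= T -> Rabs (RInt g 0 T) <= B) -> Rabs l <= B.
Proof. intros [_ H] HB. destruct (Rle_dec (Rabs l) B); auto. exfalso.
  destruct (H (Rabs l - B) ltac:(lra)) as [T0 A]. specialize (A (Rmax T0 T1) (Rmax_l _ _)).
  specialize (HB (Rmax T0 T1) (Rmax_r _ _)).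
  assert (Rabs l <= Rabs (RInt g 0 (Rmax T0 T1)) + Rabs (RInt g 0 (Rmax T0 T1) - l)).
  { replace l with (RInt g 0 (Rmax T0 T1) - (RInt g 0 (Rmax T0 T1) - l)) at 1 by ring.
    eapply Rle_trans. apply Rabs_triang. rewrite Rabs_Ropp. lra. }
  lra. Qed.

Lemma IInt_exists (g d : R -> R) : (forall T, 0 <= T -> ex_RInt g 0 T) -> (forall T, 0 <= T -> ex_RInt d 0 T) ->
  (forall t, 0 <= t -> Rabs (g t) <= d t) -> (exists M, forall T, 0 <= T -> RInt d 0 T <= M) ->
  exists l, IInt g l.
Proof. intros Hg Hd Hgd [M HM].
  set (V := fun T => RInt d 0 T).
  assert (Hinc : forall T T', 0 <= T -> T <= T' -> V T' - V T = RInt d T T').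
  { intros T T' HT HTT. unfold V; cbv beta.
    assert (A1 : ex_RInt d 0 T) by (apply (exR_sub1 d 0 T T'); [lra| apply Hd; lra]).
    assert (A2 : ex_RInt d T T') by (apply (exR_sub2 d 0 T T'); [lra| apply Hd; lra]).
    rewrite <- (RInt_ChaslesR d 0 T T' A1 A2). ring. }
  assert (Hcau : forall T T', 0 <= T -> T <= T' -> Rabs (RInt g 0 T' - RInt g 0 T) <= V T' - V T).
  { intros T T' HT HTT. rewrite Hinc by auto.
    assert (A1 : ex_RInt g 0 T) by (apply (exR_sub1 g 0 T T'); [lra| apply Hg; lra]).
    assert (A2 : ex_RInt g T T') by (apply (exR_sub2 g 0 T T'); [lra| apply Hg; lra]).
    assert (A3 : ex_RInt d T T') by (apply (exR_sub2 d 0 T T'); [lra| apply Hd; lra]).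
    assert (E1 : RInt g 0 T' - RInt g 0 T = RInt g T T') by (rewrite <- (RInt_ChaslesR g 0 T T' A1 A2); ring).
    rewrite E1. apply RInt_le_abs; auto. intros x Hx. apply Hgd. lra. }
  set (E := fun x => exists T, 0 <= T /\ x = V T).
  destruct (completeness E) as [S [HS1 HS2]].
  { exists M. intros x [T [HT ->]]. apply HM; auto. }
  { exists (V 0). exists 0. split; auto; lra. }
  assert (Hclose : forall e, e > 0 -> exists T1, 0 <= T1 /\ forall T T', T1 <= T -> T <= T' -> V T' - V T < e).
  { intros e He. destruct (Classical_Prop.classic (exists T1, 0 <= T1 /\ V T1 > S - e)) as [[T1 [HT1 HV]]|Hn].
    - exists T1. split; auto. intros T T' HT HTT.
      assert (V T' <= S) by (apply HS1; exists T'; split; auto; lra).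
      assert (V T1 <= V T) by (pose proof (Hcau T1 T HT1 HT); pose proof (Rabs_pos (RInt g 0 T - RInt g 0 T1)); lra).
      lra.
    - exfalso. assert (S <= S - e). apply HS2. intros x [T [HT ->]]. destruct (Rle_dec (V T) (S - e)); auto.
      exfalso. apply Hn. exists T. split; auto; lra. lra. }
  set (u := fun n : nat => RInt g 0 (INR n) : R).
  assert (Hu : Cauchy_crit u).
  { intros e He. destruct (Hclose e He) as [T1 [HT1 HC]]. destruct (INR_unbounded T1) as [N0 HN0].
    exists N0. intros n m Hn Hm. unfold R_dist, u.
    assert (INR N0 <= INR n) by (apply le_INR; lia). assert (INR N0 <= INR m) by (apply le_INR; lia).
    destruct (Rle_dec (INR n) (INR m)).
    - rewrite Rabs_minus_sym. eapply Rle_lt_trans. apply Hcau; auto. apply pos_INR. apply HC; lra.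
    - eapply Rle_lt_trans. apply Hcau; auto. apply pos_INR. lra. apply HC; lra. }
  destruct (Rcomplete.R_complete u Hu) as [l Hl]. exists l. split; auto.
  intros e He. destruct (Hclose (e/2) ltac:(lra)) as [T1 [HT1 HC]]. destruct (Hl (e/2) ltac:(lra)) as [N1 HN1].
  exists T1. intros T HT. destruct (INR_unbounded (Rmax T (INR N1))) as [n Hn].
  assert (T <= INR n) by (pose proof (Rmax_l T (INR N1)); lra).
  assert (INR N1 <= INR n) by (pose proof (Rmax_r T (INR N1)); lra).
  assert (Hn1 : (N1 <= n)%nat) by (apply INR_le; auto).
  specialize (HN1 n Hn1). unfold R_dist, u in HN1.
  pose proof (Hcau T (INR n) ltac:(lra) H). specialize (HC T (INR n) HT H).
  replace (RInt g 0 T - l) with (- (RInt g 0 (INR n) - RInt g 0 T) + (RInt g 0 (INR n) - l)) by ring.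
  eapply Rle_lt_trans. apply Rabs_triang. rewrite Rabs_Ropp. lra. Qed.

Definition C1p (phi psi : R -> R) :=
    (forall t, 0 <= t -> forall e, e > 0 -> exists d, d > 0 /\
       forall h, h <> 0 -> Rabs h < d -> 0 <= t + h ->
         Rabs ((phi (t + h) - phi t) / h - psi t) < e) /\
    (forall t, 0 <= t -> forall e, e > 0 -> exists d, d > 0 /\
       forall s, 0 <= s -> Rabs (s - t) < d -> Rabs (psi s - psi t) < e).

Lemma C1_rc_psi phi psi : C1p phi psi -> rc psi.
Proof. intros [_ H]. apply rc_of_local. auto. Qed.

Lemma C1_rc_phi phi psi : C1p phi psi -> rc phi.
Proof. intros [H _]. apply rc_of_local. intros x Hx e He.
  destruct (H x Hx 1 Rlt_0_1) as [d [Hd A]].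
  set (c := Rabs (psi x) + 1). assert (Hc : c > 0) by (unfold c; pose proof (Rabs_pos (psi x)); lra).
  exists (Rmin d (e / c)). split. apply Rmin_pos; auto. apply Rdiv_lt_0_compat; lra.
  intros y Hy Hyx. destruct (Req_dec y x). subst. rewrite Rminus_diag_eq, Rabs_R0; auto.
  assert (Hh : y - x <> 0) by lra.
  assert (Hd1 : Rabs (y - x) < d) by (eapply Rlt_le_trans; [exact Hyx|apply Rmin_l]).
  assert (Hd2 : Rabs (y - x) < e / c) by (eapply Rlt_le_trans; [exact Hyx|apply Rmin_r]).
  specialize (A (y - x) Hh Hd1 ltac:(lra)). replace (x + (y - x)) with y in A by ring.
  assert (E : phi y - phi x = ((phi y - phi x) / (y - x) - psi x) * (y - x) + psi x * (y - x)) by (field; auto).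
  rewrite E. eapply Rle_lt_trans. apply Rabs_triang. rewrite !Rabs_mult.
  assert (Rabs ((phi y - phi x) / (y - x) - psi x) * Rabs (y - x) <= 1 * Rabs (y - x)).
  { apply Rmult_le_compat_r. apply Rabs_pos. lra. }
  assert (c * Rabs (y - x) < e).
  { apply Rmult_lt_compat_l with (r := c) in Hd2; auto. replace (c * (e / c)) with e in Hd2 by (field; lra). lra. }
  unfold c in *. lra. Qed.

Lemma C1_deriv phi psi : C1p phi psi -> forall u, 0 < u -> derivable_pt_lim (fun t => phi (Rmax 0 t)) u (psi u).
Proof. intros [H _] u Hu e He. destruct (H u ltac:(lra) e He) as [d [Hd A]].
  exists (mkposreal (Rmin d u) (Rmin_pos _ _ Hd Hu)). intros h Hh Hhd. simpl in Hhd.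
  assert (Rabs h < d) by (eapply Rlt_le_trans; [exact Hhd|apply Rmin_l]).
  assert (Rabs h < u) by (eapply Rlt_le_trans; [exact Hhd|apply Rmin_r]).
  assert (0 <= u + h) by (pose proof (Rle_abs (- h)); rewrite Rabs_Ropp in *; lra).
  rewrite !Rmax_right by lra. apply A; auto. Qed.

Lemma C1_mvt phi psi : C1p phi psi -> forall s eps, 0 <= s -> 0 < eps ->
  exists c, s <= c <= s + eps /\ phi (s + eps) - phi s - eps * psi s = eps * (psi c - psi s).
Proof. intros HC s eps Hs He.
  set (chi := fun u => phi (Rmax 0 u) - u * psi s).
  destruct (MVT_gen chi s (s + eps) (fun u => psi u - psi s)) as [c [Hc E]].
  - intros x Hx. rewrite Rmin_left, Rmax_right in Hx by lra. apply is_derive_Reals.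
    unfold chi. apply (derivable_pt_lim_minus (fun t => phi (Rmax 0 t)) (fun u => u * psi s)).
    apply C1_deriv with (phi := phi); auto. lra.
    apply is_derive_Reals. auto_derive. auto. ring.
  - intros x Hx. unfold chi. apply (continuity_pt_minus (fun t => phi (Rmax 0 t)) (fun u => u * psi s)).
    apply (C1_rc_phi phi psi HC). reg.
  - rewrite Rmin_left, Rmax_right in Hc by lra. exists c. split; auto.
    unfold chi in E. rewrite !Rmax_right in E by lra. replace (s + eps - s) with eps in E by ring.
    lra. Qed.

Lemma aux_k (I eta e2 eps : R) : e2 > 0 -> eps > 0 -> e2 / eps * I < eta * e2 -> I <= eta * eps.
Proof. intros H1 H2 H. apply (Rmult_lt_compat_l (eps / e2)) in H. 2: apply Rdiv_lt_0_compat; lra.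
  replace (eps / e2 * (e2 / eps * I)) with I in H by (field; lra).
  replace (eps / e2 * (eta * e2)) with (eta * eps) in H by (field; lra). lra. Qed.

Lemma tail_R (rr : R -> R -> R) (Dl : R -> R -> R) e1 :
  e1 > 0 -> fin_int (fun t y => y <= rr t (e1 / 2)) ->
  (forall t, 0 <= t -> 0 <= rr t (e1 / 2)) ->
  (forall eps t, 0 < eps -> 0 <= t -> Rabs (Dl eps t) <= rr t eps) ->
  (forall t eps, 0 <= t -> 0 < eps <= e1 / 2 -> rr t eps / eps <= rr t (e1 / 2) / (e1 / 2)) ->
  (forall eps, 0 < eps -> rc (Dl eps)) ->
  forall eta, eta > 0 -> exists T0, 0 <= T0 /\ forall eps, 0 < eps <= e1 / 2 -> forall T, T0 <= T ->
    RInt (fun t => Rabs (Dl eps t)) T0 T <= eta * eps.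
Proof. intros He1 [M HM] Hpos HD Hmon Hrc eta Heta.
  set (e2 := e1 / 2). fold e2 in HM, Hpos, Hmon. assert (He2 : e2 > 0) by (unfold e2; lra).
  set (E := fun x => exists T phi (pr : Riemann_integrable phi 0 T), 0 <= T /\
        (forall t, 0 <= t <= T -> phi t <= rr t e2) /\ x = RiemannInt pr).
  destruct (completeness E) as [L [HL1 HL2]].
  { exists M. intros x [T [phi [pr [HT [Hp ->]]]]]. apply HM; auto. }
  { assert (pr0 : Riemann_integrable (fun _ => 0) 0 0) by (apply ex_RInt_Reals_0; apply ex_RInt_const).
    exists (RiemannInt pr0). exists 0, (fun _ => 0), pr0. split. lra. split; auto.
    intros t Ht. apply Hpos. lra. }
  destruct (Classical_Prop.classic (exists x, E x /\ x > L - eta * e2)) as [[x [Ex Hx]]|Hn].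
  2: { exfalso. assert (L <= L - eta * e2). apply HL2. intros y Ey. destruct (Rle_dec y (L - eta * e2)); auto.
       exfalso. apply Hn. exists y. split; auto. lra. assert (eta * e2 > 0) by (apply Rmult_lt_0_compat; lra). lra. }
  destruct Ex as [T0 [m [pr [HT0 [Hm ->]]]]].
  exists T0. split; auto. intros eps [He Hee] T HT.
  set (k := e2 / eps). assert (Hk : k > 0) by (unfold k; apply Rdiv_lt_0_compat; lra).
  set (phi := fun t => if Rle_dec t T0 then m t else k * Rabs (Dl eps t)).
  assert (X1 : ex_RInt phi 0 T0).
  { apply (ex_RInt_ext m). intros y Hy. rewrite Rmin_left, Rmax_right in Hy by lra. unfold phi.
    destruct (Rle_dec y T0); auto. lra. apply ex_RInt_Reals_1; auto. }
  assert (X2' : ex_RInt (fun t => k * Rabs (Dl eps t)) T0 T).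
  { apply rc_exRInt; auto. apply rc_scal, rc_abs, Hrc; auto. }
  assert (X2 : ex_RInt phi T0 T).
  { apply (ex_RInt_ext (fun t => k * Rabs (Dl eps t))). intros y Hy. rewrite Rmin_left, Rmax_right in Hy by lra. unfold phi.
    destruct (Rle_dec y T0); auto. lra. auto. }
  assert (X : ex_RInt phi 0 T) by (apply (exR_chasles phi 0 T0 T); auto).
  set (pr2 := ex_RInt_Reals_0 _ _ _ X).
  assert (Hle : RiemannInt pr2 <= L).
  { apply HL1. exists T, phi, pr2. split. lra. split; auto.
    intros t Ht. unfold phi. destruct (Rle_dec t T0). apply Hm; lra.
    assert (A1 : Rabs (Dl eps t) <= rr t eps) by (apply HD; lra).
    assert (A2 : rr t eps / eps <= rr t e2 / e2) by (apply Hmon; lra).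
    unfold k. replace (e2 / eps * Rabs (Dl eps t)) with (e2 * (Rabs (Dl eps t) / eps)) by (field; lra).
    apply (Rmult_le_reg_l (/ e2)). apply Rinv_0_lt_compat; lra.
    replace (/ e2 * (e2 * (Rabs (Dl eps t) / eps))) with (Rabs (Dl eps t) / eps) by (field; lra).
    replace (/ e2 * rr t e2) with (rr t e2 / e2) by (field; lra).
    eapply Rle_trans; [|exact A2]. unfold Rdiv. apply Rmult_le_compat_r. left; apply Rinv_0_lt_compat; lra. auto. }
  rewrite <- RInt_Reals in Hle. rewrite <- (RInt_ChaslesR phi 0 T0 T X1 X2) in Hle.
  rewrite (RInt_ext phi m 0 T0) in Hle. rewrite (RInt_ext phi (fun t => k * Rabs (Dl eps t)) T0 T) in Hle.
  rewrite RInt_scalR in Hle. rewrite <- RInt_Reals in Hx.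
  assert (k * RInt (fun t => Rabs (Dl eps t)) T0 T < eta * e2) by lra.
  unfold k in H. apply (aux_k _ eta e2 eps); auto.
  apply rc_exRInt; [apply rc_abs, Hrc; lra | lra | lra].
  intros y Hy. rewrite Rmin_left, Rmax_right in Hy by lra. unfold phi. destruct (Rle_dec y T0); auto. lra.
  intros y Hy. rewrite Rmin_left, Rmax_right in Hy by lra. unfold phi. destruct (Rle_dec y T0); auto. lra. Qed.

Lemma RInt_le_constR (f : R -> R) a b M : a <= b -> ex_RInt f a b -> (forall x, a < x < b -> Rabs (f x) <= M) ->
  RInt f a b <= (b - a) * M.
Proof. intros. eapply Rle_trans. apply Rle_abs. apply RInt_le_const; auto. Qed.

Lemma delta_small phi psi rr e1 : C1p phi psi -> e1 > 0 -> fin_int (fun t y => y <= rr t (e1 / 2)) ->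
  (forall t eps, 0 <= t -> eps > 0 -> Rabs (phi (t + eps) - phi t - eps * psi t) <= rr t eps) ->
  (forall t eps eps', 0 <= t -> 0 < eps -> eps <= eps' -> rr t eps / eps <= rr t eps' / eps') ->
  forall eta, eta > 0 -> exists dl, dl > 0 /\ forall eps, 0 < eps < dl -> forall T, 0 <= T ->
    RInt (fun s => Rabs (phi (s + eps) - phi s - eps * psi s)) 0 T <= eta * eps.
Proof. intros HC He1 Hfin HD Hmon eta Heta.
  set (Dl := fun eps t => phi (t + eps) - phi t - eps * psi t).
  assert (Hrc : forall eps, 0 < eps -> rc (Dl eps)).
  { intros eps He. unfold Dl. apply rc_minus. apply rc_minus. apply rc_shift. lra. apply (C1_rc_phi phi psi HC).
    apply (C1_rc_phi phi psi HC). apply rc_scal. apply (C1_rc_psi phi psi HC). }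
  destruct (tail_R rr Dl e1 He1 Hfin) with (eta := eta / 2) as [T0 [HT0 Htail]].
  { intros t Ht. eapply Rle_trans; [apply Rabs_pos|]. apply (HD t (e1/2)); lra. }
  { intros eps t He Ht. apply HD; lra. }
  { intros t eps Ht [He Hee]. apply Hmon; lra. }
  auto. lra.
  assert (Hcont : forall x, 0 <= x <= T0 + 1 -> continuity_pt (fun t => psi (Rmax 0 t)) x).
  { intros x _. apply (C1_rc_psi phi psi HC). }
  set (w := eta / (2 * (T0 + 1))). assert (Hw : 0 < w) by (unfold w; apply Rdiv_lt_0_compat; lra).
  destruct (Heine_cor2 Hcont (mkposreal w Hw)) as [dl' Hdl']. simpl in Hdl'.
  exists (Rmin dl' (Rmin 1 (e1 / 2))). split.
  { apply Rmin_pos. apply cond_pos. apply Rmin_pos; lra. }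
  intros eps [He Hed] T HT.
  assert (Hed1 : eps < dl') by (eapply Rlt_le_trans; [exact Hed|apply Rmin_l]).
  assert (Hed2 : eps < 1) by (eapply Rlt_le_trans; [exact Hed|]; eapply Rle_trans; [apply Rmin_r|apply Rmin_l]).
  assert (Hed3 : eps < e1 / 2) by (eapply Rlt_le_trans; [exact Hed|]; eapply Rle_trans; [apply Rmin_r|apply Rmin_r]).
  assert (Hpt : forall s, 0 <= s <= T0 -> Rabs (Dl eps s) <= eps * w).
  { intros s Hs. destruct (C1_mvt phi psi HC s eps ltac:(lra) He) as [c [Hc E]]. unfold Dl. rewrite E.
    rewrite Rabs_mult, Rabs_pos_eq by lra. apply Rmult_le_compat_l. lra.
    specialize (Hdl' c s ltac:(lra) ltac:(lra)). rewrite !Rmax_right in Hdl' by lra. left; apply Hdl'.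
    rewrite Rabs_pos_eq; lra. }
  assert (HwT : T0 * (eps * w) <= eta / 2 * eps).
  { unfold w. replace (T0 * (eps * (eta / (2 * (T0 + 1))))) with ((eta / 2 * eps) * (T0 / (T0 + 1))) by (field; lra).
    rewrite <- (Rmult_1_r (eta / 2 * eps)) at 2. apply Rmult_le_compat_l. nra.
    apply (Rmult_le_reg_r (T0 + 1)). lra. unfold Rdiv. rewrite Rmult_assoc, Rinv_l by lra. lra. }
  change (RInt (fun s => Rabs (Dl eps s)) 0 T <= eta * eps).
  destruct (Rle_dec T T0).
  - eapply Rle_trans. apply RInt_le_constR with (M := eps * w); auto.
    apply rc_exRInt; [apply rc_abs, Hrc; lra|lra|lra].
    intros x Hx. rewrite Rabs_Rabsolu. apply Hpt. lra.
    assert (0 <= eps * w) by nra. assert ((T - 0) * (eps * w) <= T0 * (eps * w)) by (apply Rmult_le_compat_r; lra).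
    nra.
  - assert (X1 : ex_RInt (fun s => Rabs (Dl eps s)) 0 T0) by (apply rc_exRInt; [apply rc_abs, Hrc; lra|lra|lra]).
    assert (X2 : ex_RInt (fun s => Rabs (Dl eps s)) T0 T) by (apply rc_exRInt; [apply rc_abs, Hrc; lra|lra|lra]).
    rewrite <- (RInt_ChaslesR _ 0 T0 T X1 X2).
    assert (RInt (fun s => Rabs (Dl eps s)) 0 T0 <= (T0 - 0) * (eps * w)).
    { apply RInt_le_constR; auto. intros x Hx. rewrite Rabs_Rabsolu. apply Hpt. lra. }
    specialize (Htail eps ltac:(lra) T ltac:(lra)). lra. Qed.

Lemma int_expand (a : R -> R) a0 a1 : rc a ->
  (forall eta, eta > 0 -> exists dl, dl > 0 /\ forall t, 0 < t < dl -> Rabs (a t - a0 - t * a1) <= eta * t) ->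
  forall eta, eta > 0 -> exists dl, dl > 0 /\ forall eps, 0 < eps < dl ->
    Rabs (RInt a 0 eps - eps * a0 - eps ^ 2 / 2 * a1) <= eta * eps ^ 2.
Proof. intros Ha H eta Heta. destruct (H eta Heta) as [dl [Hdl A]]. exists dl. split; auto.
  intros eps [He Hed].
  assert (P : RInt (fun t => a0 + t * a1) 0 eps = eps * a0 + eps ^ 2 / 2 * a1).
  { apply is_RInt_unique. assert (Hd := is_RInt_derive (fun t => a0 * t + a1 * t ^ 2 / 2) (fun t => a0 + t * a1) 0 eps).
    replace (eps * a0 + eps ^ 2 / 2 * a1) with (minus (a0 * eps + a1 * eps ^ 2 / 2) (a0 * 0 + a1 * 0 ^ 2 / 2)).
    apply Hd. intros. auto_derive. auto. field. intros. apply continuity_pt_filterlim. reg.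
    unfold minus, plus, opp; simpl. field. }
  assert (Xa : ex_RInt a 0 eps) by (apply rc_exRInt; auto; lra).
  assert (Xp : ex_RInt (fun t => a0 + t * a1) 0 eps).
  { apply (@ex_RInt_continuous R_CompleteNormedModule). intros. apply continuity_pt_filterlim. reg. }
  assert (E : RInt (fun t => a t - (a0 + t * a1)) 0 eps = RInt a 0 eps - (eps * a0 + eps ^ 2 / 2 * a1)).
  { rewrite <- P. apply (RInt_minus a (fun t => a0 + t * a1)); auto. }
  assert (B : Rabs (RInt (fun t => a t - (a0 + t * a1)) 0 eps) <= (eps - 0) * (eta * eps)).
  { apply RInt_le_const. lra. apply (ex_RInt_minus a (fun t => a0 + t * a1)); auto.
    intros x Hx.
    replace (a x - (a0 + x * a1)) with (a x - a0 - x * a1) by ring. eapply Rle_trans. apply A; lra.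
    apply Rmult_le_compat_l; lra. }
  rewrite E in B. replace (RInt a 0 eps - eps * a0 - eps ^ 2 / 2 * a1) with (RInt a 0 eps - (eps * a0 + eps ^ 2 / 2 * a1)) by ring.
  replace (eta * eps ^ 2) with ((eps - 0) * (eta * eps)) by ring. exact B. Qed.

Lemma vnorm_nonneg N q : 0 <= vnorm N q.
Proof. unfold vnorm. apply sumN_nonneg. intros; apply Rabs_pos. Qed.

Lemma condI_bound N D (g : Payoff) j q : condI N D g -> (j < N)%nat -> D j q -> rc (fun t => g t j q) ->
  exists M, forall T, 0 <= T -> RInt (fun t => Rabs (g t j q)) 0 T <= M.
Proof. intros HI Hj Hq Hrc. pose proof (vnorm_nonneg N q).
  destruct (HI (vnorm N q + 1) ltac:(lra)) as [M HM]. exists M. intros T HT.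
  assert (X : ex_RInt (fun t => Rabs (g t j q)) 0 T) by (apply rc_exRInt; [apply rc_abs; auto|lra|lra]).
  rewrite (RInt_Reals _ _ _ (ex_RInt_Reals_0 _ _ _ X)). apply HM; auto.
  intros t Ht d Hd. exists j, q. split; auto. split; auto. split. lra. lra. Qed.

Definition o1 (u : R -> R) := forall eta, eta > 0 -> exists dl, dl > 0 /\ forall e, 0 < e < dl -> Rabs (u e) <= eta * e.
Definition o2 (u : R -> R) := forall eta, eta > 0 -> exists dl, dl > 0 /\ forall e, 0 < e < dl -> Rabs (u e) <= eta * e ^ 2.
Definition Ok (k : nat) (u : R -> R) := exists C dl, dl > 0 /\ forall e, 0 < e < dl -> Rabs (u e) <= C * e ^ k.

Lemma Ok_Bd u : Ok 0 u <-> exists C dl, dl > 0 /\ forall e, 0 < e < dl -> Rabs (u e) <= C.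
Proof. unfold Ok. simpl. split; intros [C [dl [H1 H2]]]; exists C, dl; split; auto; intros e He; specialize (H2 e He); lra. Qed.

Lemma o1_ext u v : (forall e, 0 < e -> u e = v e) -> o1 u -> o1 v.
Proof. intros E H eta He. destruct (H eta He) as [dl [Hd A]]. exists dl. split; auto. intros e Hqq. rewrite <- E by lra. auto. Qed.
Lemma o2_ext u v : (forall e, 0 < e -> u e = v e) -> o2 u -> o2 v.
Proof. intros E H eta He. destruct (H eta He) as [dl [Hd A]]. exists dl. split; auto. intros e Hqq. rewrite <- E by lra. auto. Qed.
Lemma Ok_ext k u v : (forall e, 0 < e -> u e = v e) -> Ok k u -> Ok k v.
Proof. intros E [C [dl [Hd A]]]. exists C, dl. split; auto. intros e He. rewrite <- E by lra. auto. Qed.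

Lemma o1_plus u v : o1 u -> o1 v -> o1 (fun e => u e + v e).
Proof. intros Hu Hv eta He. destruct (Hu (eta/2) ltac:(lra)) as [d1 [Hd1 A]]. destruct (Hv (eta/2) ltac:(lra)) as [d2 [Hd2 B]].
  exists (Rmin d1 d2). split. apply Rmin_pos; auto. intros e [H1 H2].
  pose proof (Rmin_l d1 d2). pose proof (Rmin_r d1 d2).
  eapply Rle_trans. apply Rabs_triang. specialize (A e ltac:(lra)). specialize (B e ltac:(lra)). lra. Qed.
Lemma o2_plus u v : o2 u -> o2 v -> o2 (fun e => u e + v e).
Proof. intros Hu Hv eta He. destruct (Hu (eta/2) ltac:(lra)) as [d1 [Hd1 A]]. destruct (Hv (eta/2) ltac:(lra)) as [d2 [Hd2 B]].
  exists (Rmin d1 d2). split. apply Rmin_pos; auto. intros e [H1 H2].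
  pose proof (Rmin_l d1 d2). pose proof (Rmin_r d1 d2).
  eapply Rle_trans. apply Rabs_triang. specialize (A e ltac:(lra)). specialize (B e ltac:(lra)). lra. Qed.
Lemma Ok_plus k u v : Ok k u -> Ok k v -> Ok k (fun e => u e + v e).
Proof. intros [C1 [d1 [Hd1 A]]] [C2 [d2 [Hd2 B]]]. exists (C1 + C2), (Rmin d1 d2). split. apply Rmin_pos; auto.
  intros e [H1 H2]. pose proof (Rmin_l d1 d2). pose proof (Rmin_r d1 d2).
  eapply Rle_trans. apply Rabs_triang. specialize (A e ltac:(lra)). specialize (B e ltac:(lra)). lra. Qed.

Lemma o1_scal c u : o1 u -> o1 (fun e => c * u e).
Proof. intros Hu eta He. destruct (Hu (eta / (Rabs c + 1))) as [d [Hd A]].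
  apply Rdiv_lt_0_compat; auto. pose proof (Rabs_pos c); lra.
  exists d. split; auto. intros e Hqq. rewrite Rabs_mult. specialize (A e Hqq). pose proof (Rabs_pos c).
  assert (Rabs c * Rabs (u e) <= Rabs c * (eta / (Rabs c + 1) * e)) by (apply Rmult_le_compat_l; lra).
  assert (eta / (Rabs c + 1) * (Rabs c + 1) = eta) by (field; lra).
  assert (0 <= eta / (Rabs c + 1) * e) by (pose proof (Rabs_pos (u e)); lra). nra. Qed.
Lemma o2_scal c u : o2 u -> o2 (fun e => c * u e).
Proof. intros Hu eta He. destruct (Hu (eta / (Rabs c + 1))) as [d [Hd A]].
  apply Rdiv_lt_0_compat; auto. pose proof (Rabs_pos c); lra.
  exists d. split; auto. intros e Hqq. rewrite Rabs_mult. specialize (A e Hqq). pose proof (Rabs_pos c).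
  assert (Rabs c * Rabs (u e) <= Rabs c * (eta / (Rabs c + 1) * e ^ 2)) by (apply Rmult_le_compat_l; lra).
  assert (eta / (Rabs c + 1) * (Rabs c + 1) = eta) by (field; lra).
  assert (0 <= eta / (Rabs c + 1) * e ^ 2) by (pose proof (Rabs_pos (u e)); lra). nra. Qed.
Lemma Ok_scal k c u : Ok k u -> Ok k (fun e => c * u e).
Proof. intros [C [d [Hd A]]]. exists (Rabs c * C), d. split; auto. intros e He. rewrite Rabs_mult, Rmult_assoc.
  apply Rmult_le_compat_l. apply Rabs_pos. auto. Qed.

Lemma o1_zero : o1 (fun _ => 0).
Proof. intros eta He. exists 1. split. lra. intros. rewrite Rabs_R0. nra. Qed.
Lemma o2_zero : o2 (fun _ => 0).
Proof. intros eta He. exists 1. split. lra. intros. rewrite Rabs_R0. assert (0 <= e^2) by apply pow2_ge_0. nra. Qed.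

Lemma o1_sumN n (u : nat -> R -> R) : (forall l, (l < n)%nat -> o1 (u l)) -> o1 (fun e => sumN n (fun l => u l e)).
Proof. induction n; intros H; simpl. apply o1_zero. apply o1_plus. apply IHn; intros; apply H; lia. apply H; lia. Qed.
Lemma o2_sumN n (u : nat -> R -> R) : (forall l, (l < n)%nat -> o2 (u l)) -> o2 (fun e => sumN n (fun l => u l e)).
Proof. induction n; intros H; simpl. apply o2_zero. apply o2_plus. apply IHn; intros; apply H; lia. apply H; lia. Qed.

Lemma o1_of_O2 u : Ok 2 u -> o1 u.
Proof. intros [C [d [Hd A]]] eta He. exists (Rmin d (eta / (Rabs C + 1))). split.
  apply Rmin_pos; auto. apply Rdiv_lt_0_compat; auto. pose proof (Rabs_pos C); lra.
  intros e [H1 H2]. pose proof (Rmin_l d (eta / (Rabs C + 1))). pose proof (Rmin_r d (eta / (Rabs C + 1))).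
  eapply Rle_trans. apply A; lra. pose proof (Rle_abs C). pose proof (Rabs_pos C).
  assert (e * (Rabs C + 1) <= eta). { assert (eta / (Rabs C + 1) * (Rabs C + 1) = eta) by (field; lra).
    assert (e * (Rabs C + 1) <= eta / (Rabs C + 1) * (Rabs C + 1)) by (apply Rmult_le_compat_r; lra). lra. }
  simpl. nra. Qed.
Lemma o2_of_O3 u : Ok 3 u -> o2 u.
Proof. intros [C [d [Hd A]]] eta He. exists (Rmin d (eta / (Rabs C + 1))). split.
  apply Rmin_pos; auto. apply Rdiv_lt_0_compat; auto. pose proof (Rabs_pos C); lra.
  intros e [H1 H2]. pose proof (Rmin_l d (eta / (Rabs C + 1))). pose proof (Rmin_r d (eta / (Rabs C + 1))).
  eapply Rle_trans. apply A; lra. pose proof (Rle_abs C). pose proof (Rabs_pos C).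
  assert (e * (Rabs C + 1) <= eta). { assert (eta / (Rabs C + 1) * (Rabs C + 1) = eta) by (field; lra).
    assert (e * (Rabs C + 1) <= eta / (Rabs C + 1) * (Rabs C + 1)) by (apply Rmult_le_compat_r; lra). lra. }
  assert (0 <= e^2) by apply pow2_ge_0. assert (C * e <= eta) by nra.
  replace (C * e ^ 3) with ((C * e) * e ^ 2) by ring. apply Rmult_le_compat_r; auto. Qed.

Lemma Ok_mult k m u v : Ok k u -> Ok m v -> Ok (k + m) (fun e => u e * v e).
Proof. intros [C1 [d1 [Hd1 A]]] [C2 [d2 [Hd2 B]]]. exists (C1 * C2), (Rmin d1 d2). split. apply Rmin_pos; auto.
  intros e [H1 H2]. pose proof (Rmin_l d1 d2). pose proof (Rmin_r d1 d2).
  specialize (A e ltac:(lra)). specialize (B e ltac:(lra)). rewrite Rabs_mult, pow_add.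
  replace (C1 * C2 * (e ^ k * e ^ m)) with ((C1 * e ^ k) * (C2 * e ^ m)) by ring.
  apply Rmult_le_compat; auto; apply Rabs_pos. Qed.

Lemma o1_Bd u v : o1 u -> Ok 0 v -> o1 (fun e => u e * v e).
Proof. intros Hu [C [d [Hd B]]] eta He. destruct (Hu (eta / (Rabs C + 1))) as [d1 [Hd1 A]].
  apply Rdiv_lt_0_compat; auto. pose proof (Rabs_pos C); lra.
  exists (Rmin d d1). split. apply Rmin_pos; auto. intros e [H1 H2]. pose proof (Rmin_l d d1). pose proof (Rmin_r d d1).
  specialize (A e ltac:(lra)). specialize (B e ltac:(lra)). simpl in B. rewrite Rmult_1_r in B. rewrite Rabs_mult.
  pose proof (Rle_abs C). pose proof (Rabs_pos C). pose proof (Rabs_pos (v e)). pose proof (Rabs_pos (u e)).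
  assert (eta / (Rabs C + 1) * (Rabs C + 1) = eta) by (field; lra).
  assert (Rabs (u e) * Rabs (v e) <= eta / (Rabs C + 1) * e * (Rabs C + 1)).
  { apply Rmult_le_compat; auto. lra. } nra. Qed.

Lemma o2_O1_o1 u v : Ok 1 u -> o1 v -> o2 (fun e => u e * v e).
Proof. intros [C [d [Hd B]]] Hv eta He. destruct (Hv (eta / (Rabs C + 1))) as [d1 [Hd1 A]].
  apply Rdiv_lt_0_compat; auto. pose proof (Rabs_pos C); lra.
  exists (Rmin d d1). split. apply Rmin_pos; auto. intros e [H1 H2]. pose proof (Rmin_l d d1). pose proof (Rmin_r d d1).
  specialize (A e ltac:(lra)). specialize (B e ltac:(lra)). simpl in B. rewrite Rmult_1_r in B. rewrite Rabs_mult.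
  pose proof (Rle_abs C). pose proof (Rabs_pos C). pose proof (Rabs_pos (v e)). pose proof (Rabs_pos (u e)).
  assert (eta / (Rabs C + 1) * (Rabs C + 1) = eta) by (field; lra).
  assert (Rabs (u e) * Rabs (v e) <= (Rabs C + 1) * e * (eta / (Rabs C + 1) * e)).
  { apply Rmult_le_compat; auto. nra. } simpl. nra. Qed.

Lemma Bd_of_o1 u : o1 u -> Ok 0 u.
Proof. intros H. destruct (H 1 Rlt_0_1) as [d [Hd A]]. exists 1, (Rmin d 1). split. apply Rmin_pos; lra.
  intros e [H1 H2]. pose proof (Rmin_l d 1). pose proof (Rmin_r d 1). specialize (A e ltac:(lra)). simpl. lra. Qed.

Lemma Ok_const c : Ok 0 (fun _ => c).
Proof. exists (Rabs c), 1. split. lra. intros. simpl. lra. Qed.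

Lemma Ok_pow k c : Ok k (fun e => c * e ^ k).
Proof. exists (Rabs c), 1. split. lra. intros e He. rewrite Rabs_mult. rewrite (Rabs_pos_eq (e ^ k)). lra.
  apply pow_le; lra. Qed.

Lemma Ok_weaken k u : Ok (S k) u -> Ok k u.
Proof. intros [C [d [Hd A]]]. exists (Rabs C), (Rmin d 1). split. apply Rmin_pos; lra.
  intros e [H1 H2]. pose proof (Rmin_l d 1). pose proof (Rmin_r d 1). specialize (A e ltac:(lra)).
  simpl in A. assert (0 <= e ^ k) by (apply pow_le; lra). pose proof (Rle_abs C). pose proof (Rabs_pos C).
  assert (C * (e * e ^ k) <= Rabs C * e ^ k). { assert (C * e <= Rabs C) by nra. nra. } lra. Qed.

Definition aF N (f : Payoff) (Q : nat -> nat -> R) i t := sumN N (fun j => trans N Q t i j * f t j (Q j)).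

Lemma C1_of N D f ft Q j : C1_with_deriv N D f ft -> InQ N D Q -> (j < N)%nat ->
  C1p (fun t => f t j (Q j)) (fun t => ft t j (Q j)).
Proof. intros HC [HQ _] Hj. apply (HC j (Q j) Hj (HQ j Hj)). Qed.

Lemma rc_aF N D f ft Q i : (forall i q, (i < N)%nat -> D i q -> InE N i q) -> C1_with_deriv N D f ft -> InQ N D Q ->
  (i < N)%nat -> rc (aF N f Q i).
Proof. intros HD HC HQ Hi. unfold aF. apply rc_sumN. intros j Hj. apply rc_mult.
  apply trans_rc; auto. apply (InQ_gen N D Q HD HQ). apply (C1_rc_phi _ _ (C1_of N D f ft Q j HC HQ Hj)). Qed.

Lemma fin_bound n (b : nat -> R -> R) : (forall j, (j < n)%nat -> exists M, forall T, 0 <= T -> b j T <= M) ->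
  exists M, forall T, 0 <= T -> sumN n (fun j => b j T) <= M.
Proof. induction n; intros H. exists 0. intros; simpl; lra.
  destruct IHn as [M1 A]. intros; apply H; lia. destruct (H n ltac:(lia)) as [M2 B].
  exists (M1 + M2). intros T HT. simpl. specialize (A T HT). specialize (B T HT). lra. Qed.

Lemma fin_delta n (P : nat -> R -> Prop) : (forall j, (j < n)%nat -> exists dl, dl > 0 /\ forall e, 0 < e < dl -> P j e) ->
  exists dl, dl > 0 /\ forall e, 0 < e < dl -> forall j, (j < n)%nat -> P j e.
Proof. induction n; intros H. exists 1. split. lra. intros; lia.
  destruct IHn as [d1 [Hd1 A]]. intros; apply H; lia. destruct (H n ltac:(lia)) as [d2 [Hd2 B]].
  exists (Rmin d1 d2). split. apply Rmin_pos; auto. intros e [He1 He2] j Hj.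
  pose proof (Rmin_l d1 d2). pose proof (Rmin_r d1 d2).
  destruct (Nat.eq_dec j n). subst. apply B; lra. apply A; [lra|lia]. Qed.

Lemma IInt_ex_shift N D (g : Payoff) Q k c : (forall i q, (i < N)%nat -> D i q -> InE N i q) ->
  condI N D g -> InQ N D Q -> (forall j, (j < N)%nat -> rc (fun t => g t j (Q j))) -> (k < N)%nat -> 0 <= c ->
  exists l, IInt (fun s => sumN N (fun j => trans N Q s k j * g (s + c) j (Q j))) l.
Proof. intros HD HI HQ Hrc Hk Hc. pose proof (InQ_gen N D Q HD HQ) as G.
  assert (Hrc2 : rc (fun s => sumN N (fun j => trans N Q s k j * g (s + c) j (Q j)))).
  { apply rc_sumN. intros j Hj. apply rc_mult. apply trans_rc; auto. apply (rc_shift (fun t => g t j (Q j))); auto. }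
  assert (Hrcd : rc (fun s => sumN N (fun j => Rabs (g (s + c) j (Q j))))).
  { apply rc_sumN. intros j Hj. apply rc_abs, (rc_shift (fun t => g t j (Q j))); auto. }
  destruct (fin_bound N (fun j T => RInt (fun t => Rabs (g t j (Q j))) 0 T)) as [M HM].
  { intros j Hj. apply (condI_bound N D g j (Q j)); auto. apply HQ; auto. }
  apply (IInt_exists _ (fun s => sumN N (fun j => Rabs (g (s + c) j (Q j))))).
  - intros T HT. apply rc_exRInt; auto. lra.
  - intros T HT. apply rc_exRInt; auto. lra.
  - intros t Ht. eapply Rle_trans. apply sumN_abs. apply sumN_le. intros j Hj. rewrite Rabs_mult.
    pose proof (trans_abs N Q t k j G Ht Hk Hj). pose proof (Rabs_pos (g (t + c) j (Q j))).
    pose proof (Rabs_pos (trans N Q t k j)). nra.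
  - exists M. intros T HT. rewrite RInt_sumN. eapply Rle_trans; [|apply (HM (T + c)); lra].
    apply sumN_le. intros j Hj.
    assert (X : forall a b, 0 <= a <= b -> ex_RInt (fun t => Rabs (g t j (Q j))) a b).
    { intros a b Hab. apply rc_exRInt; [apply rc_abs; auto|lra|lra]. }
    rewrite (RInt_shift (fun t => Rabs (g t j (Q j)))). rewrite Rplus_0_l.
    rewrite <- (RInt_ChaslesR _ 0 c (T + c)) by (apply X; lra).
    assert (0 <= RInt (fun t => Rabs (g t j (Q j))) 0 c) by (apply RInt_ge_0; auto; [apply X; lra|intros; apply Rabs_pos]).
    lra. apply X. lra.
    intros j Hj. apply rc_exRInt. apply rc_abs, (rc_shift (fun t => g t j (Q j))); auto. lra. lra. Qed.

Lemma Fval_IInt N D (g : Payoff) Q k : (forall i q, (i < N)%nat -> D i q -> InE N i q) ->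
  condI N D g -> InQ N D Q -> (forall j, (j < N)%nat -> rc (fun t => g t j (Q j))) -> (k < N)%nat ->
  IInt (fun s => sumN N (fun j => trans N Q s k j * g s j (Q j))) (Fval N g Q k).
Proof. intros HD HI HQ Hrc Hk. destruct (IInt_ex_shift N D g Q k 0 HD HI HQ Hrc Hk (Rle_refl 0)) as [l Hl].
  assert (H : IInt (fun s => sumN N (fun j => trans N Q s k j * g s j (Q j))) l).
  { refine (IInt_ext _ _ _ _ Hl). intros t _. apply sumN_ext. intros. rewrite Rplus_0_r. reflexivity. }
  unfold Fval. rewrite (IInt_Int0inf _ l H). auto. Qed.

Definition Hf N (f : Payoff) Q k eps := Int0inf (fun s => sumN N (fun j => trans N Q s k j * f (s + eps) j (Q j))).

Lemma Hf_IInt N D (g : Payoff) Q k eps : (forall i q, (i < N)%nat -> D i q -> InE N i q) ->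
  condI N D g -> InQ N D Q -> (forall j, (j < N)%nat -> rc (fun t => g t j (Q j))) -> (k < N)%nat -> 0 <= eps ->
  IInt (fun s => sumN N (fun j => trans N Q s k j * g (s + eps) j (Q j))) (Hf N g Q k eps).
Proof. intros HD HI HQ Hrc Hk He. destruct (IInt_ex_shift N D g Q k eps HD HI HQ Hrc Hk He) as [l Hl].
  unfold Hf. rewrite (IInt_Int0inf _ l Hl). auto. Qed.

Lemma sum_swap_mul n (a : nat -> R) (b : nat -> nat -> R) (c : nat -> R) :
  sumN n (fun j => sumN n (fun k => a k * b k j) * c j) = sumN n (fun k => a k * sumN n (fun j => b k j * c j)).
Proof. rewrite (sumN_ext _ _ (fun j => sumN n (fun k => a k * (b k j * c j)))).
  rewrite sumN_swap. apply sumN_ext. intros k Hk. rewrite <- sumN_scal. auto.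
  intros j Hj. rewrite <- sumN_scal_r. apply sumN_ext. intros; ring. Qed.

Lemma Fcomp_value N D f ft Q Qs i eps : (forall i q, (i < N)%nat -> D i q -> InE N i q) ->
  condI N D f -> C1_with_deriv N D f ft -> InQ N D Q -> InQ N D Qs -> (i < N)%nat -> 0 < eps ->
  Fcomp N f Q eps Qs i = RInt (aF N f Q i) 0 eps + sumN N (fun k => trans N Q eps i k * Hf N f Qs k eps).
Proof. intros HD HI HC HQ HQs Hi He. unfold Fcomp. apply IInt_Int0inf.
  set (g := fun t => if Rle_dec t eps then sumN N (fun j => trans N Q t i j * f t j (Q j))
            else sumN N (fun j => sumN N (fun k => trans N Q eps i k * trans N Qs (t - eps) k j) * f t j (Qs j))).
  assert (Hrcs : forall j, (j < N)%nat -> rc (fun t => f t j (Qs j))).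
  { intros j Hj. apply (C1_rc_phi _ _ (C1_of N D f ft Qs j HC HQs Hj)). }
  assert (E0 : forall t, 0 < t < eps -> aF N f Q i t = g t).
  { intros t Ht. unfold g. destruct (Rle_dec t eps). auto. lra. }
  assert (X0 : ex_RInt g 0 eps).
  { apply (ex_RInt_ext (aF N f Q i)). intros x Hx. rewrite Rmin_left, Rmax_right in Hx by lra. apply E0; lra.
    apply rc_exRInt. apply (rc_aF N D f ft); auto. lra. lra. }
  replace (RInt (aF N f Q i) 0 eps) with (RInt g 0 eps).
  apply IInt_shift. lra. auto.
  apply (IInt_ext (fun s => sumN N (fun k => trans N Q eps i k *
           sumN N (fun j => trans N Qs s k j * f (s + eps) j (Qs j))))).
  { intros t Ht. unfold g. destruct (Rle_dec (t + eps) eps). lra.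
    replace (t + eps - eps) with t by ring.
    symmetry. apply sum_swap_mul. }
  apply IInt_sumN. intros k Hk. apply IInt_scal. apply (Hf_IInt N D f Qs k eps); auto. lra.
  apply RInt_ext. intros x Hx. rewrite Rmin_left, Rmax_right in Hx by lra. symmetry. apply E0; lra. Qed.

Lemma Fval_comp N D f ft Qs i eps : (forall i q, (i < N)%nat -> D i q -> InE N i q) ->
  condI N D f -> C1_with_deriv N D f ft -> InQ N D Qs -> (i < N)%nat -> 0 < eps ->
  Fval N f Qs i = Fcomp N f Qs eps Qs i.
Proof. intros HD HI HC HQs Hi He.
  assert (Hrcs : forall j, (j < N)%nat -> rc (fun t => f t j (Qs j))).
  { intros j Hj. apply (C1_rc_phi _ _ (C1_of N D f ft Qs j HC HQs Hj)). }
  pose proof (Fval_IInt N D f Qs i HD HI HQs Hrcs Hi) as H.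
  unfold Fcomp. symmetry. apply IInt_Int0inf. eapply IInt_ext; [|exact H].
  intros t Ht. destruct (Rle_dec t eps). auto. apply sumN_ext. intros j Hj. f_equal.
  replace t with (eps + (t - eps)) at 1 by ring. rewrite trans_add by auto. auto. Qed.

Lemma phi_bd phi psi : C1p phi psi -> Ok 0 phi.
Proof. intros HC. destruct (local_of_rc phi (C1_rc_phi _ _ HC) 0 (Rle_refl 0) 1 Rlt_0_1) as [d [Hd A]].
  exists (Rabs (phi 0) + 1), d. split; auto. intros e He. simpl. rewrite Rmult_1_r.
  specialize (A e ltac:(lra) ltac:(rewrite Rminus_0_r, Rabs_pos_eq; lra)).
  replace (phi e) with ((phi e - phi 0) + phi 0) by ring. eapply Rle_trans. apply Rabs_triang. lra. Qed.

Lemma sigma_o1 phi psi : C1p phi psi -> o1 (fun t => phi t - phi 0 - t * psi 0).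
Proof. intros [HC _] eta He. destruct (HC 0 (Rle_refl 0) eta He) as [d [Hd A]]. exists d. split; auto.
  intros t [Ht1 Ht2]. specialize (A t ltac:(lra) ltac:(rewrite Rabs_pos_eq; lra) ltac:(lra)).
  rewrite Rplus_0_l in A. replace (phi t - phi 0 - t * psi 0) with (t * ((phi t - phi 0) / t - psi 0)) by (field; lra).
  rewrite Rabs_mult, Rabs_pos_eq by lra. rewrite Rmult_comm. apply Rmult_le_compat_r; lra. Qed.

Lemma rho2 N Q i j : (i < N)%nat -> (j < N)%nat -> Ok 2 (fun t => trans N Q t i j - dl i j - t * Q i j).
Proof. intros Hi Hj. pose proof (Kb_ge1 N Q). exists (2 * Kb N Q ^ 2), (/ (2 * Kb N Q)). split.
  apply Rinv_0_lt_compat; lra. intros e [H1 H2]. apply trans_t1; auto. lra.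
  assert (/ (2 * Kb N Q) * Kb N Q = / 2) by (field; lra). nra. Qed.

Lemma rho3 N Q i j : (j < N)%nat -> (i < N)%nat ->
  Ok 3 (fun e => trans N Q e i j - (dl i j + e * Q i j + e ^ 2 / 2 * matpow N Q 2 i j)).
Proof. intros Hj Hi. pose proof (Kb_ge1 N Q). exists (2 * Kb N Q ^ 3), (/ (2 * Kb N Q)). split.
  apply Rinv_0_lt_compat; lra. intros e [H1 H2]. rewrite <- (matpow1 N Q i j Hi).
  replace (2 * Kb N Q ^ 3 * e ^ 3) with (2 * (e * Kb N Q) ^ 3) by ring. apply trans_taylor; auto. lra.
  assert (/ (2 * Kb N Q) * Kb N Q = / 2) by (field; lra). nra. Qed.

Lemma aF_expand N D f ft Q i : (forall i q, (i < N)%nat -> D i q -> InE N i q) ->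
  C1_with_deriv N D f ft -> InQ N D Q -> (i < N)%nat ->
  o1 (fun t => aF N f Q i t - f 0 i (Q i) - t * (ft 0 i (Q i) + sumN N (fun j => Q i j * f 0 j (Q j)))).
Proof. intros HD HC HQ Hi.
  set (sg := fun j t => f t j (Q j) - f 0 j (Q j) - t * ft 0 j (Q j)).
  apply (o1_ext (fun t => sumN N (fun j => (trans N Q t i j - dl i j - t * Q i j) * f t j (Q j) + dl i j * sg j t
       + (Q i j * ft 0 j (Q j)) * t ^ 2 + sg j t * (t * Q i j)))).
  - intros t Ht. unfold aF.
    assert (E : sumN N (fun j => (trans N Q t i j - dl i j - t * Q i j) * f t j (Q j) + dl i j * sg j t
       + (Q i j * ft 0 j (Q j)) * t ^ 2 + sg j t * (t * Q i j)) =
       sumN N (fun j => trans N Q t i j * f t j (Q j)) - sumN N (fun j => (if Nat.eq_dec i j then 1 else 0) * (f 0 j (Q j) + t * ft 0 j (Q j)))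
       - t * sumN N (fun j => Q i j * f 0 j (Q j))).
    { rewrite <- sumN_scal, <- !sumN_minus. apply sumN_ext. intros j Hj. unfold sg, dl. ring. }
    rewrite E. rewrite (sumN_delta_l N i (fun j => f 0 j (Q j) + t * ft 0 j (Q j))) by auto. ring.
  - apply o1_sumN. intros j Hj. pose proof (C1_of N D f ft Q j HC HQ Hj) as C.
    apply o1_plus. apply o1_plus. apply o1_plus.
    + apply o1_of_O2. apply (Ok_mult 2 0 _ (fun t => f t j (Q j))). apply rho2; auto. apply (phi_bd _ _ C).
    + apply o1_scal. apply (sigma_o1 _ _ C).
    + apply o1_of_O2. apply Ok_pow.
    + apply o1_Bd. apply (sigma_o1 _ _ C). apply Ok_weaken. apply (Ok_ext 1 (fun t => Q i j * t ^ 1)).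
      intros; ring. apply Ok_pow. Qed.

Lemma Hf_expand N D f ft Qs k : (forall i q, (i < N)%nat -> D i q -> InE N i q) ->
  condI N D f -> C1_with_deriv N D f ft -> condI N D ft -> condR N D f ft -> InQ N D Qs -> (k < N)%nat ->
  o1 (fun e => Hf N f Qs k e - Fval N f Qs k - e * Fval N ft Qs k).
Proof. intros HD HfI HC HftI [r Hr] HQs Hk eta Heta.
  pose proof (InQ_gen N D Qs HD HQs) as G.
  assert (Hrcf : forall j, (j < N)%nat -> rc (fun t => f t j (Qs j))).
  { intros j Hj. apply (C1_rc_phi _ _ (C1_of N D f ft Qs j HC HQs Hj)). }
  assert (Hrcg : forall j, (j < N)%nat -> rc (fun t => ft t j (Qs j))).
  { intros j Hj. apply (C1_rc_psi _ _ (C1_of N D f ft Qs j HC HQs Hj)). }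
  pose proof (pos_INR N) as HN.
  set (eta' := eta / (INR N + 1)). assert (He' : eta' > 0) by (unfold eta'; apply Rdiv_lt_0_compat; lra).
  destruct (fin_delta N (fun j e => forall T, 0 <= T ->
     RInt (fun s => Rabs (f (s + e) j (Qs j) - f s j (Qs j) - e * ft s j (Qs j))) 0 T <= eta' * e)) as [dl [Hdl A]].
  { intros j Hj. destruct (Hr j (Qs j) Hj (proj1 HQs j Hj)) as [R1 [_ [[e1 [He1 Hfin]] Hmon]]].
    apply (delta_small (fun t => f t j (Qs j)) (fun t => ft t j (Qs j)) (fun t e => r t e j (Qs j)) e1); auto.
    apply (C1_of N D f ft Qs j HC HQs Hj). apply Hfin. lra.
    }
  exists dl. split; auto. intros e [He Hed].
  pose proof (Hf_IInt N D f Qs k e HD HfI HQs Hrcf Hk ltac:(lra)) as I1.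
  pose proof (Fval_IInt N D f Qs k HD HfI HQs Hrcf Hk) as I2.
  pose proof (Fval_IInt N D ft Qs k HD HftI HQs Hrcg Hk) as I3.
  pose proof (IInt_plus _ _ _ _ (IInt_plus _ _ _ _ I1 (IInt_scal (-1) _ _ I2)) (IInt_scal (- e) _ _ I3)) as I.
  set (Dl := fun j s => f (s + e) j (Qs j) - f s j (Qs j) - e * ft s j (Qs j)).
  assert (I' : IInt (fun s => sumN N (fun j => trans N Qs s k j * Dl j s))
      (Hf N f Qs k e + -1 * Fval N f Qs k + - e * Fval N ft Qs k)).
  { eapply IInt_ext; [|exact I]. intros t Ht. simpl. rewrite <- !sumN_scal, <- !sumN_plus.
    apply sumN_ext. intros j Hj. unfold Dl. ring. }
  replace (Hf N f Qs k e - Fval N f Qs k - e * Fval N ft Qs k) with (Hf N f Qs k e + -1 * Fval N f Qs k + - e * Fval N ft Qs k) by ring.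
  apply (IInt_bound _ _ _ 0 I'). intros T HT.
  assert (Xd : forall j, (j < N)%nat -> rc (Dl j)).
  { intros j Hj. unfold Dl. apply rc_minus. apply rc_minus. apply (rc_shift (fun t => f t j (Qs j))). lra. auto. auto.
    apply rc_scal. auto. }
  assert (X : forall j, (j < N)%nat -> ex_RInt (fun s => trans N Qs s k j * Dl j s) 0 T).
  { intros j Hj. apply rc_exRInt; [|lra|lra]. apply rc_mult. apply trans_rc; auto. auto. }
  rewrite (RInt_sumN N (fun j s => trans N Qs s k j * Dl j s)) by auto.
  eapply Rle_trans. apply sumN_abs. eapply Rle_trans. apply (sumN_le _ _ (fun _ => eta' * e)).
  - intros j Hj. eapply Rle_trans; [|apply (A e ltac:(lra) j Hj T HT)].
    apply RInt_le_abs; auto. apply rc_exRInt; [apply rc_abs; apply (Xd j Hj)|lra|lra].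
    intros x Hx. cbv beta. rewrite Rabs_mult. pose proof (trans_abs N Qs x k j G ltac:(lra) Hk Hj).
    pose proof (Rabs_pos (Dl j x)). pose proof (Rabs_pos (trans N Qs x k j)). unfold Dl in *. nra.
  - rewrite sumN_const. unfold eta'. replace (INR N * (eta / (INR N + 1) * e)) with ((eta * e) * (INR N / (INR N + 1))) by (field; lra).
    assert (INR N / (INR N + 1) <= 1). { apply (Rmult_le_reg_r (INR N + 1)). lra. unfold Rdiv. rewrite Rmult_assoc, Rinv_l by lra. lra. }
    assert (0 <= eta * e) by nra. nra. Qed.

Definition a1def N (f ft : Payoff) (Q : nat -> nat -> R) i := ft 0 i (Q i) + sumN N (fun j => Q i j * f 0 j (Q j)).
Definition c1def N (f : Payoff) Qs Q i :=
  f 0 i (Qs i) - f 0 i (Q i) + sumN N (fun k => (Qs i k - Q i k) * Fval N f Qs k).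
Definition c2def N (f ft : Payoff) Qs Q i :=
  (a1def N f ft Qs i - a1def N f ft Q i) / 2 + sumN N (fun k => (Qs i k - Q i k) * Fval N ft Qs k +
      (matpow N Qs 2 i k - matpow N Q 2 i k) * Fval N f Qs k / 2).

Lemma D_expand N D f ft Qs Q i : (forall i q, (i < N)%nat -> D i q -> InE N i q) ->
  condI N D f -> C1_with_deriv N D f ft -> condI N D ft -> condR N D f ft -> InQ N D Qs -> InQ N D Q -> (i < N)%nat ->
  o2 (fun e => (Fval N f Qs i - Fcomp N f Q e Qs i) - c1def N f Qs Q i * e - c2def N f ft Qs Q i * e ^ 2).
Proof. intros HD HfI HC HftI HR HQs HQ Hi.
  set (h := fun k e => Hf N f Qs k e - Fval N f Qs k - e * Fval N ft Qs k).
  set (rs := fun k e => trans N Qs e i k - (dl i k + e * Qs i k + e ^ 2 / 2 * matpow N Qs 2 i k)).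
  set (rq := fun k e => trans N Q e i k - (dl i k + e * Q i k + e ^ 2 / 2 * matpow N Q 2 i k)).
  set (d1 := fun k => Qs i k - Q i k). set (d2 := fun k => matpow N Qs 2 i k - matpow N Q 2 i k).
  set (RAs := fun e => RInt (aF N f Qs i) 0 e - e * f 0 i (Qs i) - e ^ 2 / 2 * a1def N f ft Qs i).
  set (RAq := fun e => RInt (aF N f Q i) 0 e - e * f 0 i (Q i) - e ^ 2 / 2 * a1def N f ft Q i).
  set (Rk := fun k e => (d2 k * Fval N ft Qs k / 2) * e ^ 3 + (e * d1 k + e ^ 2 * (d2 k / 2)) * h k e + (rs k e + -1 * rq k e) * Hf N f Qs k e).
  apply (o2_ext (fun e => RAs e + -1 * RAq e + sumN N (fun k => Rk k e))).
  - intros e He. rewrite (Fval_comp N D f ft Qs i e) by auto.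
    rewrite (Fcomp_value N D f ft Qs Qs i e) by auto. rewrite (Fcomp_value N D f ft Q Qs i e) by auto.
    assert (E : sumN N (fun k => Rk k e) = sumN N (fun k => trans N Qs e i k * Hf N f Qs k e) - sumN N (fun k => trans N Q e i k * Hf N f Qs k e)
      - e * sumN N (fun k => d1 k * Fval N f Qs k) - e ^ 2 * sumN N (fun k => d1 k * Fval N ft Qs k + d2 k * Fval N f Qs k / 2)).
    { rewrite <- !sumN_scal, <- !sumN_minus. apply sumN_ext. intros k Hk. unfold Rk, h, rs, rq. unfold d1, d2. unfold Rdiv. ring. }
    unfold c1def, c2def. fold d1 d2.
    rewrite E. unfold RAs, RAq. unfold d1, d2. unfold Rdiv. ring.
  - apply o2_plus. apply o2_plus.
    + unfold RAs. intros eta Heta. apply (int_expand (aF N f Qs i) (f 0 i (Qs i)) (a1def N f ft Qs i)); auto.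
      apply (rc_aF N D f ft); auto. exact (aF_expand N D f ft Qs i HD HC HQs Hi).
    + apply o2_scal. unfold RAq. intros eta Heta. apply (int_expand (aF N f Q i) (f 0 i (Q i)) (a1def N f ft Q i)); auto.
      apply (rc_aF N D f ft); auto. exact (aF_expand N D f ft Q i HD HC HQ Hi).
    + apply o2_sumN. intros k Hk. unfold Rk. apply o2_plus. apply o2_plus.
      * apply o2_of_O3. apply Ok_pow.
      * apply o2_O1_o1. apply Ok_plus. apply (Ok_ext 1 (fun e => d1 k * e ^ 1)). intros; ring. apply Ok_pow.
        apply Ok_weaken. apply (Ok_ext 2 (fun e => d2 k / 2 * e ^ 2)). intros; ring. apply Ok_pow.
        unfold h. apply (Hf_expand N D f ft Qs k); auto.
      * apply o2_of_O3. apply (Ok_mult 3 0). apply Ok_plus. apply rho3; auto. apply Ok_scal. apply rho3; auto.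
        apply (Ok_ext 0 (fun e => Fval N f Qs k + Fval N ft Qs k * e ^ 1 + h k e)). intros e He. unfold h. ring.
        apply Ok_plus. apply Ok_plus. apply Ok_const. apply Ok_weaken. apply Ok_pow.
        apply Bd_of_o1. unfold h. apply (Hf_expand N D f ft Qs k); auto. Qed.

Lemma logic_weak (Df : R -> R) c1 c2 : o2 (fun e => Df e - c1 * e - c2 * e ^ 2) ->
  (forall d, d > 0 -> exists e0, e0 > 0 /\ forall e, 0 < e < e0 -> Df e / e > - d) -> c1 >= 0.
Proof. intros Ho Hw. destruct (Rge_or_gt c1 0) as [|Hc]; auto. exfalso.
  destruct (Hw (- c1 / 2) ltac:(lra)) as [e0 [He0 A]]. destruct (Ho 1 Rlt_0_1) as [dl [Hdl B]].
  pose proof (Rabs_pos c2). pose proof (Rle_abs c2).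
  set (e := Rmin (Rmin e0 dl) (- c1 / (4 * (Rabs c2 + 1))) / 2).
  assert (Hm : 0 < Rmin (Rmin e0 dl) (- c1 / (4 * (Rabs c2 + 1)))).
  { apply Rmin_pos. apply Rmin_pos; auto. apply Rdiv_lt_0_compat; lra. }
  assert (He : 0 < e) by (unfold e; lra).
  assert (He1 : e < e0). { unfold e. pose proof (Rmin_l (Rmin e0 dl) (- c1 / (4 * (Rabs c2 + 1)))). pose proof (Rmin_l e0 dl). lra. }
  assert (He2 : e < dl). { unfold e. pose proof (Rmin_l (Rmin e0 dl) (- c1 / (4 * (Rabs c2 + 1)))). pose proof (Rmin_r e0 dl). lra. }
  assert (He3 : e <= - c1 / (4 * (Rabs c2 + 1))). { unfold e. pose proof (Rmin_r (Rmin e0 dl) (- c1 / (4 * (Rabs c2 + 1)))). lra. }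
  specialize (A e (conj He He1)). specialize (B e (conj He He2)).
  assert (Hk : (Rabs c2 + 1) * e <= - c1 / 4).
  { apply (Rmult_le_compat_l (Rabs c2 + 1)) in He3; [|lra]. replace ((Rabs c2 + 1) * (- c1 / (4 * (Rabs c2 + 1)))) with (- c1 / 4) in He3 by (field; lra). lra. }
  apply Rabs_le_between' in B. hnf in B.
  assert (Df e <= e * (c1 + (c2 + 1) * e)). { replace (e * (c1 + (c2 + 1) * e)) with (c1 * e + c2 * e ^ 2 + 1 * e ^ 2) by ring. 
    pose proof (Rle_abs (Df e - c1 * e - c2 * e ^ 2)). lra. }
  assert (Df e / e <= c1 + (c2 + 1) * e). { apply (Rmult_le_reg_r e); auto. unfold Rdiv. rewrite Rmult_assoc, Rinv_l by lra. lra. }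
  assert ((c2 + 1) * e <= (Rabs c2 + 1) * e) by (apply Rmult_le_compat_r; lra). lra. Qed.

Lemma logic_pos (Df : R -> R) c1 c2 : o2 (fun e => Df e - c1 * e - c2 * e ^ 2) ->
  (c1 > 0 \/ (c1 = 0 /\ c2 > 0)) -> exists e, e > 0 /\ forall e', 0 < e' <= e -> Df e' >= 0.
Proof. intros Ho [Hc | [Hc Hc2]].
  - destruct (Ho 1 Rlt_0_1) as [dl [Hdl B]]. pose proof (Rabs_pos c2). pose proof (Rle_abs (- c2)). rewrite Rabs_Ropp in H0.
    set (e := Rmin (dl / 2) (c1 / (2 * (Rabs c2 + 1)))).
    assert (He : e > 0) by (unfold e; apply Rmin_pos; apply Rdiv_lt_0_compat; lra).
    exists e. split; auto. intros e' [He'1 He'2].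
    assert (e' < dl) by (pose proof (Rmin_l (dl / 2) (c1 / (2 * (Rabs c2 + 1)))); unfold e in He'2; lra).
    assert (He3 : e' <= c1 / (2 * (Rabs c2 + 1))) by (pose proof (Rmin_r (dl / 2) (c1 / (2 * (Rabs c2 + 1)))); unfold e in He'2; lra).
    specialize (B e' (conj He'1 H1)).
    assert (Hk : (Rabs c2 + 1) * e' <= c1 / 2).
    { apply (Rmult_le_compat_l (Rabs c2 + 1)) in He3; [|lra]. replace ((Rabs c2 + 1) * (c1 / (2 * (Rabs c2 + 1)))) with (c1 / 2) in He3 by (field; lra). lra. }
    pose proof (Rle_abs (- (Df e' - c1 * e' - c2 * e' ^ 2))). rewrite Rabs_Ropp in H2.
    assert ((- c2 + 1) * e' <= (Rabs c2 + 1) * e') by (apply Rmult_le_compat_r; lra).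
    assert (0 <= e' * (c1 - (- c2 + 1) * e')) by (apply Rmult_le_pos; lra).
    replace (e' * (c1 - (- c2 + 1) * e')) with (c1 * e' + c2 * e' ^ 2 - 1 * e' ^ 2) in H4 by ring. lra.
  - destruct (Ho (c2 / 2) ltac:(lra)) as [dl [Hdl B]]. exists (dl / 2). split. lra.
    intros e' [He'1 He'2]. specialize (B e' ltac:(lra)). subst c1.
    pose proof (Rle_abs (- (Df e' - 0 * e' - c2 * e' ^ 2))). rewrite Rabs_Ropp in H.
    assert (0 <= e' ^ 2) by apply pow2_ge_0. nra. Qed.

Lemma logic_neg (Df : R -> R) c1 c2 : o2 (fun e => Df e - c1 * e - c2 * e ^ 2) -> c1 = 0 -> c2 < 0 ->
  forall e, e > 0 -> exists e', 0 < e' <= e /\ Df e' < 0.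
Proof. intros Ho Hc Hc2 e He. destruct (Ho (- c2 / 2) ltac:(lra)) as [dl [Hdl B]].
  set (e' := Rmin e (dl / 2)). assert (He' : e' > 0) by (unfold e'; apply Rmin_pos; lra).
  exists e'. split. split; auto. apply Rmin_l.
  assert (e' < dl) by (pose proof (Rmin_r e (dl / 2)); unfold e' in *; lra).
  specialize (B e' ltac:(lra)). subst c1. pose proof (Rle_abs (Df e' - 0 * e' - c2 * e' ^ 2)).
  assert (0 < e' ^ 2) by (apply pow_lt; lra). nra. Qed.

Lemma c1_gamma N f Qs Q i : c1def N f Qs Q i = Gamma N f Qs i (Qs i) - Gamma N f Qs i (Q i).
Proof. unfold c1def, Gamma. rewrite (sumN_ext _ _ (fun k => Qs i k * Fval N f Qs k - Q i k * Fval N f Qs k)) by (intros; ring).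
  rewrite sumN_minus. ring. Qed.

Lemma lam_form N f ft Qs Q i : (i < N)%nat -> Lambda N f ft Qs i Q =
  a1def N f ft Q i + 2 * sumN N (fun j => Q i j * Fval N ft Qs j) + sumN N (fun k => matpow N Q 2 i k * Fval N f Qs k).
Proof. intros Hi. unfold Lambda, a1def, Gamma.
  assert (E1 : sumN N (fun k => matpow N Q 2 i k * Fval N f Qs k) =
               sumN N (fun j => Q i j * sumN N (fun l => Q j l * Fval N f Qs l))).
  { rewrite (sumN_ext _ _ (fun k => sumN N (fun j => Q i j * (Q j k * Fval N f Qs k)))).
    rewrite sumN_swap. apply sumN_ext. intros. rewrite <- sumN_scal. auto.
    intros k Hk. rewrite matpow2 by auto. rewrite <- sumN_scal_r. apply sumN_ext. intros; ring. }
  assert (E2 : sumN N (fun j => Q i j * (2 * Fval N ft Qs j + (f 0 j (Q j) + sumN N (fun j0 => Q j j0 * Fval N f Qs j0)))) =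
     sumN N (fun j => Q i j * f 0 j (Q j)) + 2 * sumN N (fun j => Q i j * Fval N ft Qs j) +
     sumN N (fun j => Q i j * sumN N (fun l => Q j l * Fval N f Qs l))).
  { rewrite <- sumN_scal, <- !sumN_plus. apply sumN_ext. intros; ring. }
  rewrite E1, E2. ring. Qed.

Lemma c2_lambda N f ft Qs Q i : (i < N)%nat -> 2 * c2def N f ft Qs Q i = Lambda N f ft Qs i Qs - Lambda N f ft Qs i Q.
Proof. intros Hi. rewrite !lam_form by auto. unfold c2def.
  rewrite (sumN_ext _ _ (fun k => (Qs i k * Fval N ft Qs k - Q i k * Fval N ft Qs k) +
     / 2 * (matpow N Qs 2 i k * Fval N f Qs k - matpow N Q 2 i k * Fval N f Qs k))) by (intros; unfold Rdiv; ring).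
  rewrite sumN_plus, sumN_scal, !sumN_minus. field. Qed.

Theorem mainTheorem5 (N : nat) (D : nat -> (nat -> R) -> Prop)
  (HD : forall i q, (i < N)%nat -> D i q -> InE N i q)
  (f ft : Payoff)
  (HfI : condI N D f)
  (HC1 : C1_with_deriv N D f ft)
  (HftI : condI N D ft)
  (HR : condR N D f ft)
  (Qs : nat -> nat -> R) (HQs : InQ N D Qs)
  (Hweak : weak_eq N D f Qs) :
  ((forall i Q, InRset N D f Qs i Q -> Lambda N f ft Qs i Qs > Lambda N f ft Qs i Q) ->
     strong_eq N D f Qs) /\
  ((exists i Q, InRset N D f Qs i Q /\ Lambda N f ft Qs i Qs < Lambda N f ft Qs i Q) ->
     ~ strong_eq N D f Qs).
Proof. split.
  - intros Hlam Q i HQ Hi.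
    pose proof (D_expand N D f ft Qs Q i HD HfI HC1 HftI HR HQs HQ Hi) as Hexp.
    assert (Hc1 : c1def N f Qs Q i >= 0).
    { apply (logic_weak (fun e => Fval N f Qs i - Fcomp N f Q e Qs i) _ (c2def N f ft Qs Q i) Hexp).
      intros d Hd. apply (Hweak Q i HQ Hi d Hd). }
    destruct (Rle_lt_or_eq_dec 0 (c1def N f Qs Q i) (Rge_le _ _ Hc1)) as [Hp|Hz].
    + destruct (logic_pos _ _ _ Hexp (or_introl Hp)) as [e [He A]]. exists e. split; auto.
      intros e' He'. specialize (A e' He'). simpl in A. lra.
    + destruct (Classical_Prop.classic (Q = Qs)) as [Heq|Hne].
      * subst Q. exists 1. split. lra. intros e' He'. rewrite <- (Fval_comp N D f ft Qs i e') by (auto; lra). right; reflexivity.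
      * assert (HG : Gamma N f Qs i (Qs i) = Gamma N f Qs i (Q i)) by (pose proof (c1_gamma N f Qs Q i); lra).
        specialize (Hlam i Q (conj Hi (conj HQ (conj Hne HG)))).
        assert (Hc2 : c2def N f ft Qs Q i > 0) by (pose proof (c2_lambda N f ft Qs Q i Hi); lra).
        destruct (logic_pos _ _ _ Hexp (or_intror (conj (eq_sym Hz) Hc2))) as [e [He A]]. exists e. split; auto.
        intros e' He'. specialize (A e' He'). simpl in A. lra.
  - intros [i [Q [[Hi [HQ [Hne HG]]] Hlt]]] Hstrong.
    pose proof (D_expand N D f ft Qs Q i HD HfI HC1 HftI HR HQs HQ Hi) as Hexp.
    assert (Hc1 : c1def N f Qs Q i = 0) by (rewrite c1_gamma; lra).
    assert (Hc2 : c2def N f ft Qs Q i < 0) by (pose proof (c2_lambda N f ft Qs Q i Hi); lra).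
    destruct (Hstrong Q i HQ Hi) as [e [He A]].
    destruct (logic_neg _ _ _ Hexp Hc1 Hc2 e He) as [e' [He' B]].
    specialize (A e' He'). simpl in B. lra.
Qed.
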